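(* Let $\tau$ be an untwisted skew product with group component $\mathbb Z^d$, height function $h$, and base shift a transitive subshift of finite type $(\Sigma,\sigma)$. For any surjective homomorphism $L:\mathbb Z^d\to\mathbb Z$ there exists $C>0$ such that: if there are $s\in\Sigma$ and $n>0$ with $L(h(s,n))>C$, then there is a periodic point $s'$ (of some period $n'$) with $\hat L(\mathrm{rot}(s'))>0$; and if there are $s$, $n>0$ with $L(h(s,n))<-C$, then there is a point $s''$ with $\hat L(\mathrm{rot}(s''))<0$. Consequently, $0\in\mathrm{Int}(\mathrm{rot}(\tau))$ if and only if for every surjective homomorphism $L:\mathbb Z^d\to\mathbb Z$, $\sup\{L(h(s,m)):s\in\Sigma,\ m\in\mathbb N\}=\infty$.
   Context: Subshift of finite type $(\Sigma,\sigma)$: finite state set, $\{0,1\}$ transition matrix, $\Sigma$ the bi-infinite allowed sequences, $\sigma$ left shift; transitive means any state can reach any other through an allowed word. Untwisted skew product: $\tau(s,n)=(\sigma s,n+h(s))$, $h:\Sigma\to\mathbb Z^d$ depending only on $(s_0,s_1)$. $h(s,n)=\sum_{i=0}^{n-1}h(\sigma^is)$; $\mathrm{rot}(s)=\lim_{n\to\infty}h(s,n)/n$ when it exists; $\mathrm{rot}(\tau)$ the set of all rotation vectors, interior in $\mathbb R^d$. $\hat L:\mathbb R^d\to\mathbb R$ is the linear extension of $L$. *)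

(* Defs.v *)
From Stdlib Require Import Reals ZArith Arith.
Open Scope R_scope.

(* States of the SFT are 0..k-1; A is the {0,1} transition matrix. *)
(* Elements of Z^d are represented by vecZ := nat -> Z, only coordinates i<d
   being meaningful; similarly R^d by nat -> R. *)
Definition vecZ := nat -> Z.
Definition vecR := nat -> R.

Definition inSigma (k : nat) (A : nat -> nat -> bool) (s : Z -> nat) : Prop :=
  forall i : Z, (s i < k)%nat /\ A (s i) (s (i + 1)%Z) = true.

Definition transitive_SFT (k : nat) (A : nat -> nat -> bool) : Prop :=
  forall i j : nat, (i < k)%nat -> (j < k)%nat ->
    exists (n : nat) (p : nat -> nat),
      (1 <= n)%nat /\ p O = i /\ p n = j /\
      (forall m, (m <= n)%nat -> (p m < k)%nat) /\
      (forall m, (m < n)%nat -> A (p m) (p (S m)) = true).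

(* Birkhoff sum h(s,n) = sum_{j<n} h(sigma^j s), with h(s) = h(s_0,s_1) *)
Fixpoint hsum (h : nat -> nat -> vecZ) (s : Z -> nat) (n : nat) : vecZ :=
  match n with
  | O => fun _ => 0%Z
  | S n' => fun i => (hsum h s n' i + h (s (Z.of_nat n')) (s (Z.of_nat n' + 1)%Z) i)%Z
  end.

Definition has_rot (d : nat) (h : nat -> nat -> vecZ) (s : Z -> nat) (x : vecR) : Prop :=
  forall i, (i < d)%nat -> Un_cv (fun n => IZR (hsum h s n i) / INR n) (x i).

Definition rot_set (d k : nat) (A : nat -> nat -> bool) (h : nat -> nat -> vecZ) (x : vecR) : Prop :=
  exists s, inSigma k A s /\ has_rot d h s x.

Definition in_interior (d : nat) (P : vecR -> Prop) (x : vecR) : Prop :=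
  exists eps, eps > 0 /\
    forall y : vecR, (forall i, (i < d)%nat -> Rabs (y i - x i) < eps) -> P y.

Definition is_hom (d : nat) (L : vecZ -> Z) : Prop :=
  (forall u v : vecZ, (forall i, (i < d)%nat -> u i = v i) -> L u = L v) /\
  (forall u v : vecZ, L (fun i => (u i + v i)%Z) = (L u + L v)%Z).

Definition surjZ (L : vecZ -> Z) : Prop := forall z : Z, exists v, L v = z.

Definition unitZ (i : nat) : vecZ := fun j => if Nat.eqb j i then 1%Z else 0%Z.

Fixpoint sum_lt (n : nat) (f : nat -> R) : R :=
  match n with O => 0 | S n' => sum_lt n' f + f n' end.

Definition Lhat (d : nat) (L : vecZ -> Z) (x : vecR) : R :=
  sum_lt d (fun i => IZR (L (unitZ i)) * x i).

Definition periodic (s : Z -> nat) (n : nat) : Prop :=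
  forall m : Z, s (m + Z.of_nat n)%Z = s m.

(* Main.v *)
Require Import Defs.
From Stdlib Require Import Reals ZArith Znumtheory Arith Bool Lia Lra List FunctionalExtensionality Classical.
Import ListNotations.

Open Scope nat_scope.

Fixpoint vd (k : nat) (A : nat -> nat -> bool) (x : nat) (l : list nat) : Prop :=
  match l with
  | [] => (x < k)%nat
  | y :: l' => (x < k)%nat /\ A x y = true /\ vd k A y l'
  end.

Fixpoint lw (w : nat -> nat -> Z) (x : nat) (l : list nat) : Z :=
  match l with
  | [] => 0%Z
  | y :: l' => (w x y + lw w y l')%Z
  end.

Lemma vd_lt k A x l : vd k A x l -> (x < k)%nat.
Proof. destruct l; simpl; tauto. Qed.

Lemma last_cons' {X} (l : list X) x y : last (y :: l) x = last l y.
Proof. revert x y; induction l as [|a l IH]; intros x y; [reflexivity|].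
  change (last (a :: l) x = last (a :: l) y). rewrite !IH. reflexivity. Qed.

Lemma vd_app k A x l1 l2 : vd k A x (l1 ++ l2) <-> vd k A x l1 /\ vd k A (last l1 x) l2.
Proof.
  revert x; induction l1 as [|y l1 IH]; intros x.
  - simpl. split; [intros H; split; [eapply vd_lt; eauto | exact H] | tauto].
  - rewrite last_cons', <- app_comm_cons. cbn [vd]. rewrite IH. tauto.
Qed.


Lemma lw_app w x l1 l2 : lw w x (l1 ++ l2) = (lw w x l1 + lw w (last l1 x) l2)%Z.
Proof.
  revert x; induction l1 as [|y l1 IH]; intros x; [simpl; lia|].
  rewrite last_cons'. simpl lw at 1. rewrite IH. simpl. lia.
Qed.

Lemma last_app_cons {X} (l1 l2 : list X) x y : last (l1 ++ y :: l2) x = last (y :: l2) x.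
Proof. induction l1 as [|z l1 IH]; simpl; auto. rewrite IH. destruct l1; simpl; destruct l2; auto. Qed.

Lemma last_app {X} (l1 l2 : list X) x : last (l1 ++ l2) x = last l2 (last l1 x).
Proof. revert x; induction l1 as [|a l1 IH]; intros x; [reflexivity|].
  rewrite <- app_comm_cons, !last_cons'. apply IH. Qed.

Lemma last_firstn l : forall i x, i <= length l -> last (firstn i l) x = nth i (x :: l) 0.
Proof. induction l as [|a l IH]; intros [|i] x H; try reflexivity; [simpl in H; lia|].
  cbn [firstn]. rewrite last_cons'. rewrite IH by (simpl in H; lia). reflexivity. Qed.

Lemma firstn_plus {X} (l : list X) i m : firstn (i + m) l = firstn i l ++ firstn m (skipn i l).
Proof. revert l; induction i as [|i IH]; intros [|a l]; simpl; auto. rewrite firstn_nil; auto. f_equal; auto. Qed.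

Lemma pigeon : forall k (f : nat -> nat), (forall j, (j <= k)%nat -> (f j < k)%nat) ->
  exists i j, (i < j <= k)%nat /\ f i = f j.
Proof.
  induction k as [|k IH]; intros f Hf.
  - specialize (Hf 0%nat (le_n 0)). lia.
  - destruct (classic (exists i, (i < S k)%nat /\ f i = f (S k))) as [[i [Hi E]]|Hn].
    + exists i, (S k). split; [lia|auto].
    + set (g := fun j => if Nat.ltb (f j) (f (S k)) then f j else pred (f j)).
      assert (Hg : forall j, (j <= k)%nat -> (g j < k)%nat).
      { intros j Hj. unfold g. assert (f j <> f (S k)) by (intro E; apply Hn; exists j; split; [lia|auto]).
        pose proof (Hf j ltac:(lia)). pose proof (Hf (S k) (le_n _)).
        destruct (Nat.ltb_spec (f j) (f (S k))); lia. }
      destruct (IH g Hg) as [i [j [Hij E]]]. exists i, j. split; [lia|].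
      assert (f i <> f (S k)) by (intro E'; apply Hn; exists i; split; [lia|auto]).
      assert (f j <> f (S k)) by (intro E'; apply Hn; exists j; split; [lia|auto]).
      unfold g in E. destruct (Nat.ltb_spec (f i) (f (S k))), (Nat.ltb_spec (f j) (f (S k))); lia.
Qed.

Fixpoint sumN (n : nat) (f : nat -> Z) : Z :=
  match n with O => 0%Z | S n' => (sumN n' f + f n')%Z end.

Definition wB (k : nat) (w : nat -> nat -> Z) : Z :=
  sumN k (fun x => sumN k (fun y => Z.abs (w x y))).

Lemma sumN_nonneg n f : (forall j, (j < n)%nat -> 0 <= f j)%Z -> (0 <= sumN n f)%Z.
Proof. induction n; simpl; intros H; [lia|]. specialize (IHn (fun j Hj => H j ltac:(lia))). specialize (H n ltac:(lia)). lia. Qed.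

Lemma sumN_ge n f j : (forall j, (j < n)%nat -> 0 <= f j)%Z -> (j < n)%nat -> (f j <= sumN n f)%Z.
Proof.
  induction n; simpl; intros H Hj; [lia|].
  assert (0 <= sumN n f)%Z by (apply sumN_nonneg; intros; apply H; lia).
  destruct (Nat.eq_dec j n) as [->|]; [pose proof (H n ltac:(lia)); lia|].
  specialize (IHn (fun j Hj => H j ltac:(lia)) ltac:(lia)). pose proof (H n ltac:(lia)); lia.
Qed.

Lemma wB_ge k w x y : (x < k)%nat -> (y < k)%nat -> (Z.abs (w x y) <= wB k w)%Z.
Proof.
  intros Hx Hy. unfold wB.
  eapply Z.le_trans; [| apply (sumN_ge k _ x); [|exact Hx]].
  - apply (sumN_ge k (fun y => Z.abs (w x y)) y); [intros; lia| exact Hy].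
  - intros; apply sumN_nonneg; intros; lia.
Qed.

Lemma lw_bound k A w x l : vd k A x l -> (lw w x l <= Z.of_nat (length l) * wB k w)%Z.
Proof.
  revert x; induction l as [|y l IH]; intros x H; [simpl; lia|].
  destruct H as [Hx [_ H]]. specialize (IH _ H). pose proof (wB_ge k w x y Hx (vd_lt _ _ _ _ H)).
  cbn [lw length]. rewrite Nat2Z.inj_succ. lia.
Qed.

Lemma nth_vd k A x l j : vd k A x l -> (j <= length l)%nat -> (nth j (x :: l) 0 < k)%nat.
Proof.
  revert x j; induction l as [|y l IH]; intros x j H Hj; simpl in *.
  - destruct j; [auto|lia].
  - destruct j; [tauto|]. apply IH; [tauto|lia].
Qed.

Definition isloop k A x l := vd k A x l /\ (1 <= length l)%nat /\ last l x = x.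

Lemma walk_decomp k A w : forall n x l, length l = n -> vd k A x l ->
  (exists y q, isloop k A y q /\ (length q <= k)%nat /\ (lw w y q > 0)%Z) \/
  (lw w x l <= Z.of_nat k * wB k w)%Z.
Proof.
  intros n. induction n as [n IH] using lt_wf_ind. intros x l Hlen Hv.
  destruct (le_lt_dec n k) as [Hn|Hn].
  - right. pose proof (lw_bound k A w x l Hv).
    assert (0 <= wB k w)%Z by (unfold wB; apply sumN_nonneg; intros; apply sumN_nonneg; intros; lia).
    subst n. assert (Z.of_nat (length l) <= Z.of_nat k)%Z by lia. nia.
  - destruct (pigeon k (fun j => nth j (x :: l) 0)) as [i [j [Hij E]]].
    { intros j Hj. apply nth_vd with (A:=A); [auto|lia]. }
    set (l1 := firstn i l). set (l2 := firstn (j - i) (skipn i l)). set (l3 := skipn j l).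
    assert (Hl : l = l1 ++ l2 ++ l3).
    { unfold l1, l2, l3. rewrite <- (firstn_skipn i l) at 1. f_equal.
      replace (skipn j l) with (skipn (j - i) (skipn i l)) by (rewrite skipn_skipn; f_equal; lia).
      symmetry; apply firstn_skipn. }
    assert (Hl1 : length l1 = i) by (unfold l1; rewrite length_firstn; lia).
    assert (Hl2 : length l2 = (j - i)%nat) by (unfold l2; rewrite length_firstn, length_skipn; lia).
    assert (Hlast1 : last l1 x = nth i (x :: l) 0) by (apply last_firstn; lia).
    assert (Hlast2 : last l2 (last l1 x) = nth j (x :: l) 0).
    { rewrite <- last_app. unfold l1, l2. rewrite <- firstn_plus. replace (i + (j - i)) with j by lia.
      apply last_firstn; lia. }
    rewrite Hl in Hv. apply vd_app in Hv. destruct Hv as [Hv1 Hv23]. apply vd_app in Hv23. destruct Hv23 as [Hv2 Hv3].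
    set (y := last l1 x) in *.
    destruct (Z_lt_le_dec 0 (lw w y l2)) as [Hpos|Hnp].
    + left. exists y, l2. split; [split; [auto|split; [lia|]]|split; [lia|lia]].
      rewrite Hlast2, <- E, <- Hlast1. reflexivity.
    + assert (Hy : last l2 y = y) by (rewrite Hlast2, <- E, <- Hlast1; reflexivity).
      rewrite Hy in Hv3.
      assert (Hv' : vd k A x (l1 ++ l3)) by (apply vd_app; auto).
      destruct (IH (length (l1 ++ l3)) ltac:(rewrite length_app; subst n; rewrite Hl, !length_app; lia) x (l1 ++ l3) eq_refl Hv') as [HL|HR].
      * left; exact HL.
      * right. rewrite Hl, !lw_app. rewrite lw_app in HR. fold y in HR |- *. rewrite Hy. lia.
Qed.

Open Scope nat_scope.

Definition vadd (u v : vecZ) : vecZ := fun i => (u i + v i)%Z.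
Definition vscale (z : Z) (u : vecZ) : vecZ := fun i => (z * u i)%Z.
Definition vzero : vecZ := fun _ => 0%Z.

Fixpoint vw (h : nat -> nat -> vecZ) (x : nat) (l : list nat) : vecZ :=
  match l with
  | [] => vzero
  | y :: l' => vadd (h x y) (vw h y l')
  end.

Lemma vw_app h x l1 l2 : vw h x (l1 ++ l2) = vadd (vw h x l1) (vw h (last l1 x) l2).
Proof.
  revert x; induction l1 as [|y l1 IH]; intros x.
  - simpl. extensionality i. unfold vadd, vzero. lia.
  - rewrite <- app_comm_cons, last_cons'. cbn [vw]. rewrite IH. extensionality i. unfold vadd. lia.
Qed.

Lemma hom_zero d L : is_hom d L -> L vzero = 0%Z.
Proof. intros [_ H]. specialize (H vzero vzero). replace (fun i => (vzero i + vzero i)%Z) with vzero in H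
  by (extensionality i; unfold vzero; lia). lia. Qed.

Lemma hom_add d L u v : is_hom d L -> L (vadd u v) = (L u + L v)%Z.
Proof. intros [_ H]. apply H. Qed.

Lemma hom_opp d L u : is_hom d L -> L (vscale (-1) u) = (- L u)%Z.
Proof. intros HL. pose proof (hom_add d L u (vscale (-1) u) HL).
  replace (vadd u (vscale (-1) u)) with vzero in H by (extensionality i; unfold vadd, vscale, vzero; lia).
  rewrite (hom_zero d L) in H by auto. lia. Qed.

Lemma hom_nat d L u n : is_hom d L -> L (vscale (Z.of_nat n) u) = (Z.of_nat n * L u)%Z.
Proof. intros HL. induction n as [|n IH].
  - replace (vscale (Z.of_nat 0) u) with vzero by (extensionality i; unfold vscale, vzero; lia).
    rewrite (hom_zero d L) by auto. lia.
  - replace (vscale (Z.of_nat (S n)) u) with (vadd (vscale (Z.of_nat n) u) u)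
      by (extensionality i; unfold vadd, vscale; lia).
    rewrite (hom_add d L), IH by auto. lia. Qed.

Lemma hom_scale d L u z : is_hom d L -> L (vscale z u) = (z * L u)%Z.
Proof. intros HL. destruct (Z_le_gt_dec 0 z).
  - replace z with (Z.of_nat (Z.to_nat z)) by lia. apply (hom_nat d L); auto.
  - replace (vscale z u) with (vscale (-1) (vscale (Z.of_nat (Z.to_nat (- z))) u))
      by (extensionality i; unfold vscale; lia).
    rewrite (hom_opp d L), (hom_nat d L) by auto. lia. Qed.

Definition vsum (n : nat) (v : vecZ) : vecZ := fun j => sumN n (fun i => (v i * unitZ i j)%Z).

Lemma vsum_agree n v j : j < n -> vsum n v j = v j.
Proof. unfold vsum. induction n as [|n IH]; intros Hj; [lia|]. simpl.
  destruct (Nat.eq_dec j n) as [->|Hne].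
  - assert (sumN n (fun i => (v i * unitZ i n)%Z) = 0%Z).
    { clear IH Hj. assert (forall m, m <= n -> sumN m (fun i => (v i * unitZ i n)%Z) = 0%Z); [|auto].
      induction m; intros; simpl; [auto|]. rewrite IHm by lia. unfold unitZ.
      destruct (Nat.eqb_spec n m); [lia|lia]. }
    rewrite H. unfold unitZ. rewrite Nat.eqb_refl. lia.
  - rewrite IH by lia. unfold unitZ. destruct (Nat.eqb_spec j n); [lia|lia]. Qed.

Lemma hom_decomp d L v : is_hom d L -> L v = sumN d (fun i => (L (unitZ i) * v i)%Z).
Proof.
  intros HL. transitivity (L (vsum d v)).
  { destruct HL as [H1 _]. apply H1. intros i Hi. rewrite vsum_agree; auto. }
  assert (forall n, L (vsum n v) = sumN n (fun i => (L (unitZ i) * v i)%Z)); [|auto].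
  induction n as [|n IH].
  - replace (vsum 0 v) with vzero by (extensionality i; reflexivity). apply (hom_zero d L); auto.
  - replace (vsum (S n) v) with (vadd (vsum n v) (vscale (v n) (unitZ n)))
      by (extensionality i; unfold vsum, vadd, vscale; simpl; lia).
    rewrite (hom_add d L), (hom_scale d L), IH by auto. simpl. lia.
Qed.

Lemma L_vw d L h x l : is_hom d L -> L (vw h x l) = lw (fun a b => L (h a b)) x l.
Proof. intros HL. revert x; induction l as [|y l IH]; intros x; simpl.
  - apply (hom_zero d L); auto.
  - rewrite (hom_add d L), IH by auto. reflexivity. Qed.

Definition walk_of (s : Z -> nat) (n : nat) : list nat := map (fun j => s (Z.of_nat (S j))) (seq 0 n).

Lemma walk_of_S s n : walk_of s (S n) = walk_of s n ++ [s (Z.of_nat (S n))].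
Proof. unfold walk_of. rewrite seq_S, map_app. reflexivity. Qed.

Lemma walk_of_length s n : length (walk_of s n) = n.
Proof. unfold walk_of. rewrite length_map, length_seq. reflexivity. Qed.

Lemma walk_of_last s n : last (walk_of s n) (s 0%Z) = s (Z.of_nat n).
Proof. destruct n; [reflexivity|]. rewrite walk_of_S, last_last. reflexivity. Qed.

Lemma hsum_walk h s n : hsum h s n = vw h (s 0%Z) (walk_of s n).
Proof.
  induction n as [|n IH].
  - reflexivity.
  - rewrite walk_of_S, vw_app, walk_of_last. simpl hsum. rewrite IH. extensionality i.
    unfold vadd, vzero. cbn [vw]. unfold vadd, vzero. rewrite Nat2Z.inj_succ, <- Z.add_1_r. lia.
Qed.

Lemma walk_of_nth s n j : j <= n -> nth j (s 0%Z :: walk_of s n) 0 = s (Z.of_nat j).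
Proof. intros Hj. destruct j; [reflexivity|]. simpl. unfold walk_of.
  rewrite nth_indep with (d' := (fun j => s (Z.of_nat (S j))) 0) by (rewrite length_map, length_seq; lia).
  rewrite (map_nth (fun j0 => s (Z.of_nat (S j0))) (seq 0 n) 0 j). rewrite seq_nth by lia. reflexivity. Qed.

Lemma walk_of_vd k A s n : inSigma k A s -> vd k A (s 0%Z) (walk_of s n).
Proof.
  intros HS. induction n as [|n IH].
  - simpl. apply HS.
  - rewrite walk_of_S. apply vd_app. split; auto. rewrite walk_of_last. simpl.
    destruct (HS (Z.of_nat n)) as [H1 H2]. destruct (HS (Z.of_nat (S n))) as [H3 _].
    cbn [vd]. replace (Z.pos (Pos.of_succ_nat n)) with (Z.of_nat n + 1)%Z by lia.
    replace (Z.of_nat (S n)) with (Z.of_nat n + 1)%Z in H3 by lia. auto.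
Qed.

Lemma walk_of_eq s n x P : n <= length P -> (forall j, j <= n -> s (Z.of_nat j) = nth j (x :: P) 0) ->
  walk_of s n = firstn n P.
Proof.
  intros Hn H. apply nth_ext with (d := 0) (d' := 0).
  - rewrite walk_of_length, length_firstn. lia.
  - intros j Hj. rewrite walk_of_length in Hj.
    rewrite (nth_firstn n P j 0). destruct (Nat.ltb_spec j n); [|lia].
    transitivity (nth (S j) (s 0%Z :: walk_of s n) 0); [reflexivity|].
    rewrite walk_of_nth, H by lia. reflexivity.
Qed.

Open Scope R_scope.

Lemma sum_lt_ext n f g : (forall j, (j < n)%nat -> f j = g j) -> sum_lt n f = sum_lt n g.
Proof. induction n; intros H; simpl; [auto|]. rewrite IHn by (intros; apply H; lia). rewrite H by lia. auto. Qed.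

Lemma sum_lt_plus n f g : sum_lt n (fun j => f j + g j) = sum_lt n f + sum_lt n g.
Proof. induction n; simpl; [lra|]. rewrite IHn. lra. Qed.

Lemma sum_lt_scal n c f : sum_lt n (fun j => c * f j) = c * sum_lt n f.
Proof. induction n; simpl; [lra|]. rewrite IHn. lra. Qed.

Lemma sum_lt_minus n f g : sum_lt n (fun j => f j - g j) = sum_lt n f - sum_lt n g.
Proof. induction n; simpl; [lra|]. rewrite IHn. lra. Qed.

Lemma sum_lt_const n c : sum_lt n (fun _ => c) = INR n * c.
Proof. induction n; simpl sum_lt; [simpl; lra|]. rewrite IHn, S_INR. lra. Qed.

Lemma sum_lt_le n f g : (forall j, (j < n)%nat -> f j <= g j) -> sum_lt n f <= sum_lt n g.
Proof. induction n; intros H; simpl; [lra|]. pose proof (H n ltac:(lia)). pose proof (IHn ltac:(intros; apply H; lia)). lra. Qed.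

Lemma sum_lt_nonneg n f : (forall j, (j < n)%nat -> 0 <= f j) -> 0 <= sum_lt n f.
Proof. intros H. replace 0 with (sum_lt n (fun _ => 0)) by (rewrite sum_lt_const; lra). apply sum_lt_le; auto. Qed.

Lemma sum_lt_abs n f : Rabs (sum_lt n f) <= sum_lt n (fun j => Rabs (f j)).
Proof. induction n; simpl; [rewrite Rabs_R0; lra|]. eapply Rle_trans; [apply Rabs_triang|]. lra. Qed.

Lemma sum_lt_ge_term n f j : (forall j, (j < n)%nat -> 0 <= f j) -> (j < n)%nat -> f j <= sum_lt n f.
Proof. induction n; intros H Hj; [lia|]. simpl.
  assert (0 <= sum_lt n f) by (apply sum_lt_nonneg; intros; apply H; lia).
  destruct (Nat.eq_dec j n) as [->|]; [lra|]. pose proof (IHn ltac:(intros; apply H; lia) ltac:(lia)).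
  pose proof (H n ltac:(lia)). lra. Qed.

Lemma sum_lt_pos n f j : (forall j, (j < n)%nat -> 0 <= f j) -> (j < n)%nat -> 0 < f j -> 0 < sum_lt n f.
Proof. intros. pose proof (sum_lt_ge_term n f j H H0). lra. Qed.

Lemma IZR_sumN n (f : nat -> Z) : IZR (sumN n f) = sum_lt n (fun j => IZR (f j)).
Proof. induction n; simpl; [auto|]. rewrite plus_IZR, IHn. auto. Qed.

Fixpoint amax (m : nat) (f : nat -> R) : nat :=
  match m with
  | O => O
  | S m' => if Rlt_dec (f (amax m' f)) (f m') then m' else amax m' f
  end.

Lemma amax_spec m f : (amax (S m) f < S m)%nat /\ forall i, (i <= m)%nat -> f i <= f (amax (S m) f).
Proof.
  induction m as [|m [IH1 IH2]].
  - simpl. destruct (Rlt_dec (f 0%nat) (f 0%nat)); split; try lia; intros i Hi; replace i with 0%nat by lia; lra.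
  - change (amax (S (S m)) f) with (if Rlt_dec (f (amax (S m) f)) (f (S m)) then S m else amax (S m) f).
    destruct (Rlt_dec (f (amax (S m) f)) (f (S m))) as [Hl|Hl].
    + split; [lia|]. intros i Hi. destruct (Nat.eq_dec i (S m)) as [->|]; [lra|]. pose proof (IH2 i ltac:(lia)). lra.
    + split; [lia|]. intros i Hi. destruct (Nat.eq_dec i (S m)) as [->|]; [lra|]. apply IH2; lia.
Qed.

Lemma amax_lt m f : (0 < m)%nat -> (amax m f < m)%nat.
Proof. intros H. destruct m; [lia|]. apply amax_spec. Qed.

Lemma amax_ge m f i : (i < m)%nat -> f i <= f (amax m f).
Proof. intros H. destruct m; [lia|]. apply amax_spec. lia. Qed.

Fixpoint cnt (m : nat) (rho : nat -> R) (t : nat) : nat -> nat :=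
  match t with
  | O => fun _ => O
  | S t' => let c := cnt m rho t' in
            let j := amax m (fun j => rho j * INR t - INR (c j)) in
            fun i => if Nat.eqb i j then S (c i) else c i
  end.

Definition Jg (m : nat) (rho : nat -> R) (t : nat) : nat :=
  amax m (fun j => rho j * INR (S t) - INR (cnt m rho t j)).

Lemma cnt_S m rho t i : cnt m rho (S t) i = if Nat.eqb i (Jg m rho t) then S (cnt m rho t i) else cnt m rho t i.
Proof. reflexivity. Qed.

Lemma sum_lt_update n (c : nat -> nat) J (g : nat -> R) : (J < n)%nat ->
  sum_lt n (fun j => INR (if Nat.eqb j J then S (c j) else c j) * g j) = sum_lt n (fun j => INR (c j) * g j) + g J.
Proof.
  induction n; intros H; [lia|]. simpl. destruct (Nat.eqb_spec n J) as [->|Hne].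
  - rewrite (sum_lt_ext J _ (fun j => INR (c j) * g j)). { rewrite S_INR. lra. }
    intros j Hj. destruct (Nat.eqb_spec j J); [lia|auto].
  - rewrite IHn by lia. lra.
Qed.

Lemma sum_cnt m rho t : (0 < m)%nat -> sum_lt m (fun j => INR (cnt m rho t j)) = INR t.
Proof.
  intros Hm. induction t.
  - rewrite (sum_lt_ext _ _ (fun _ => 0)) by (intros; reflexivity). rewrite sum_lt_const. simpl; lra.
  - rewrite (sum_lt_ext _ _ (fun j => INR (if Nat.eqb j (Jg m rho t) then S (cnt m rho t j) else cnt m rho t j) * 1)).
    2:{ intros j Hj. rewrite cnt_S. lra. }
    rewrite sum_lt_update by (apply amax_lt; auto).
    rewrite (sum_lt_ext _ _ (fun j => INR (cnt m rho t j))) by (intros; lra). rewrite IHt, S_INR. lra.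
Qed.

Lemma disc_low m rho : (0 < m)%nat -> (forall j, (j < m)%nat -> 0 <= rho j) -> sum_lt m rho = 1 ->
  forall t j, (j < m)%nat -> rho j * INR t - INR (cnt m rho t j) > -1.
Proof.
  intros Hm Hr Hs t. induction t as [|t IH]; intros j Hj.
  - simpl. pose proof (Hr j Hj). lra.
  - set (f := fun j => rho j * INR (S t) - INR (cnt m rho t j)).
    assert (HJ : (Jg m rho t < m)%nat) by (apply amax_lt; auto).
    assert (Hsum : sum_lt m f = 1).
    { unfold f. rewrite sum_lt_minus, sum_cnt by auto. rewrite (sum_lt_ext _ _ (fun j => INR (S t) * rho j)) by (intros; lra).
      rewrite sum_lt_scal, Hs, S_INR. lra. }
    assert (Hmax : forall i, (i < m)%nat -> f i <= f (Jg m rho t)) by (intros; apply amax_ge; auto).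
    assert (Hpos : f (Jg m rho t) > 0).
    { assert (sum_lt m f <= sum_lt m (fun _ => f (Jg m rho t))) by (apply sum_lt_le; auto).
      rewrite sum_lt_const, Hsum in H. apply lt_0_INR in Hm. clearbody f.
      destruct (Rle_lt_dec (f (Jg m rho t)) 0); [|lra]. assert (INR m * f (Jg m rho t) <= 0) by (rewrite <- (Rmult_0_r (INR m)); apply Rmult_le_compat_l; lra). lra. }
    rewrite cnt_S. destruct (Nat.eqb_spec j (Jg m rho t)) as [->|Hne].
    + unfold f in Hpos. rewrite !S_INR in *. lra.
    + pose proof (IH j Hj). rewrite S_INR in *. pose proof (Hr j Hj). lra.
Qed.

Lemma disc_bound m rho : (0 < m)%nat -> (forall j, (j < m)%nat -> 0 <= rho j) -> sum_lt m rho = 1 ->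
  forall t j, (j < m)%nat -> Rabs (INR (cnt m rho t j) - rho j * INR t) <= INR m.
Proof.
  intros Hm Hr Hs t j Hj.
  assert (Hl := disc_low m rho Hm Hr Hs t).
  set (x := fun i => rho i * INR t - INR (cnt m rho t i) + 1).
  assert (Hsx : sum_lt m x = INR m).
  { unfold x. rewrite sum_lt_plus, sum_lt_minus, sum_cnt, sum_lt_const by auto.
    rewrite (sum_lt_ext _ _ (fun i => INR t * rho i)) by (intros; lra). rewrite sum_lt_scal, Hs. lra. }
  assert (x j <= sum_lt m x) by (apply sum_lt_ge_term; auto; intros i Hi; pose proof (Hl i Hi); unfold x; lra).
  rewrite Hsx in H. unfold x in H. pose proof (Hl j Hj). assert (1 <= INR m) by (apply (le_INR 1); lia). apply Rabs_le. lra.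
Qed.

Open Scope R_scope.

Fixpoint pref (m : nat) (rho : nat -> R) (F : nat -> list nat) (t : nat) : list nat :=
  match t with
  | O => []
  | S t' => pref m rho F t' ++ F (Jg m rho t')
  end.

Definition loops_ok k A a m (F : nat -> list nat) := forall j, (j < m)%nat -> isloop k A a (F j).

Lemma pref_last k A a m rho F t : (0 < m)%nat -> loops_ok k A a m F -> last (pref m rho F t) a = a.
Proof. intros Hm HF. induction t; [reflexivity|]. simpl. rewrite last_app, IHt.
  apply (HF _ (amax_lt _ _ Hm)). Qed.

Lemma pref_vd k A a m rho F t : (0 < m)%nat -> (a < k)%nat -> loops_ok k A a m F -> vd k A a (pref m rho F t).
Proof. intros Hm Ha HF. induction t; [simpl; auto|]. simpl. apply vd_app. split; auto.
  rewrite (pref_last k A) by auto. apply (HF _ (amax_lt _ _ Hm)). Qed.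

Lemma pref_len k A a m rho F t : (0 < m)%nat -> loops_ok k A a m F -> (t <= length (pref m rho F t))%nat.
Proof. intros Hm HF. induction t; [simpl; lia|]. simpl. rewrite length_app.
  pose proof (proj1 (proj2 (HF _ (amax_lt m (fun j => rho j * INR (S t) - INR (cnt m rho t j)) Hm)))).
  unfold Jg. lia. Qed.

Lemma pref_prefix m rho F t t' : (t <= t')%nat -> exists r, pref m rho F t' = pref m rho F t ++ r.
Proof. induction 1. { exists []. rewrite app_nil_r. auto. }
  destruct IHle as [r Hr]. exists (r ++ F (Jg m rho m0)). simpl. rewrite Hr, app_assoc. auto. Qed.

Lemma vw_lw h x l i : vw h x l i = lw (fun a b => h a b i) x l.
Proof. revert x; induction l; intros; simpl; [reflexivity|]. unfold vadd. rewrite IHl. auto. Qed.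

Lemma pref_vw k A h a m rho F t i : (0 < m)%nat -> loops_ok k A a m F ->
  IZR (vw h a (pref m rho F t) i) = sum_lt m (fun j => INR (cnt m rho t j) * IZR (vw h a (F j) i)).
Proof.
  intros Hm HF. induction t.
  - rewrite (sum_lt_ext _ _ (fun j => 0 * IZR (vw h a (F j) i))) by (intros; simpl; lra).
    rewrite sum_lt_scal. simpl. unfold vzero. lra.
  - simpl pref. rewrite vw_app, (pref_last k A) by auto. unfold vadd. rewrite plus_IZR, IHt.
    rewrite (sum_lt_ext m (fun j => INR (cnt m rho (S t) j) * IZR (vw h a (F j) i)) (fun j => INR (if Nat.eqb j (Jg m rho t) then S (cnt m rho t j) else cnt m rho t j) * IZR (vw h a (F j) i)))
      by (intros; rewrite cnt_S; reflexivity).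
    rewrite sum_lt_update by (apply amax_lt; auto). reflexivity.
Qed.

Lemma pref_length m rho F t : (0 < m)%nat ->
  INR (length (pref m rho F t)) = sum_lt m (fun j => INR (cnt m rho t j) * INR (length (F j))).
Proof.
  intros Hm. induction t.
  - rewrite (sum_lt_ext _ _ (fun j => 0 * INR (length (F j)))) by (intros; simpl; lra).
    rewrite sum_lt_scal. simpl. lra.
  - simpl pref. rewrite length_app, plus_INR, IHt.
    rewrite (sum_lt_ext m (fun j => INR (cnt m rho (S t) j) * INR (length (F j))) (fun j => INR (if Nat.eqb j (Jg m rho t) then S (cnt m rho t j) else cnt m rho t j) * INR (length (F j))))
      by (intros; rewrite cnt_S; reflexivity).
    rewrite sum_lt_update by (apply amax_lt; auto). reflexivity.
Qed.

Definition per (a : nat) (l : list nat) (z : Z) : nat := nth (Z.to_nat (z mod Z.of_nat (length l))) (a :: l) 0%nat.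

Definition fwd a m rho F (n : nat) : nat := nth n (a :: pref m rho F (S n)) 0%nat.

Definition rseq a m rho F (z : Z) : nat :=
  if (z <? 0)%Z then per a (F 0%nat) z else fwd a m rho F (Z.to_nat z).

Lemma nth_prefix (a : nat) P r j : (j <= length P)%nat -> nth j (a :: P) 0%nat = nth j (a :: P ++ r) 0%nat.
Proof. intros H. rewrite app_comm_cons, app_nth1; auto. simpl. lia. Qed.

Lemma fwd_eq k A a m rho F n T : (0 < m)%nat -> loops_ok k A a m F -> (n <= length (pref m rho F T))%nat ->
  fwd a m rho F n = nth n (a :: pref m rho F T) 0%nat.
Proof.
  intros Hm HF H. unfold fwd. pose proof (pref_len k A a m rho F (S n) Hm HF).
  destruct (Nat.le_ge_cases (S n) T) as [Hle|Hle]; destruct (pref_prefix m rho F _ _ Hle) as [r Hr]; rewrite Hr.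
  - apply nth_prefix; lia.
  - symmetry; apply nth_prefix; lia.
Qed.

Lemma vd_edge k A x P j : vd k A x P -> (j < length P)%nat ->
  A (nth j (x :: P) 0%nat) (nth (S j) (x :: P) 0%nat) = true.
Proof. revert x j; induction P as [|y P IH]; intros x j H Hj; simpl in Hj; [lia|].
  destruct j; simpl; [apply H|]. apply IH; [apply H|lia]. Qed.

Lemma per_props k A x l : isloop k A x l -> forall z,
  (per x l z < k)%nat /\ A (per x l z) (per x l (z + 1)) = true.
Proof.
  intros [Hv [Hl Hlast]] z. unfold per. set (n0 := Z.of_nat (length l)).
  assert (Hn0 : (0 < n0)%Z) by (unfold n0; lia).
  pose proof (Z.mod_pos_bound z n0 Hn0) as Hb.
  split.
  - apply nth_vd with (A := A); auto. lia.
  - assert (E : nth (Z.to_nat ((z + 1) mod n0)) (x :: l) 0%nat = nth (S (Z.to_nat (z mod n0))) (x :: l) 0%nat).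
    { destruct (Z.eq_dec (z mod n0 + 1) n0) as [Heq|Hne].
      - assert ((z + 1) mod n0 = 0)%Z.
        { symmetry. apply Z.mod_unique_pos with (q := (z / n0 + 1)%Z); [lia|].
          pose proof (Z.div_mod z n0 ltac:(lia)). lia. }
        rewrite H. replace (S (Z.to_nat (z mod n0))) with (length l) by lia.
        simpl (nth (Z.to_nat 0) _ _).
        destruct (exists_last (l := l)) as [l' [y Hy]]. { intro; subst; simpl in Hl; lia. }
        rewrite Hy in Hlast |- *. rewrite last_last in Hlast. subst y.
        rewrite length_app. replace (length l' + length [x])%nat with (S (length l')) by (simpl; lia).
        cbn [nth]. rewrite app_nth2, Nat.sub_diag by lia. reflexivity.
      - assert ((z + 1) mod n0 = z mod n0 + 1)%Z.
        { symmetry. apply Z.mod_unique_pos with (q := (z / n0)%Z); [lia|].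
          pose proof (Z.div_mod z n0 ltac:(lia)). lia. }
        rewrite H. f_equal. lia. }
    rewrite E. apply vd_edge with (k := k); auto. lia.
Qed.

Lemma per_zero x l : per x l 0%Z = x.
Proof. unfold per. rewrite Zmod_0_l. reflexivity. Qed.

Open Scope R_scope.

Lemma rseq_nat a m rho F n : rseq a m rho F (Z.of_nat n) = fwd a m rho F n.
Proof. unfold rseq. destruct (Z.ltb_spec (Z.of_nat n) 0); [lia|]. rewrite Nat2Z.id. auto. Qed.

Lemma fwd_0 a m rho F : fwd a m rho F 0 = a.
Proof. reflexivity. Qed.

Lemma rseq_inSigma k A a m rho F : (0 < m)%nat -> loops_ok k A a m F -> inSigma k A (rseq a m rho F).
Proof.
  intros Hm HF z. assert (Hl0 := HF 0%nat Hm).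
  destruct (Z_lt_le_dec z 0) as [Hz|Hz].
  - assert (E1 : rseq a m rho F z = per a (F 0%nat) z) by (unfold rseq; destruct (Z.ltb_spec z 0); [auto|lia]).
    assert (E2 : rseq a m rho F (z + 1) = per a (F 0%nat) (z + 1)).
    { destruct (Z_lt_le_dec (z + 1) 0).
      - unfold rseq; destruct (Z.ltb_spec (z+1) 0); [auto|lia].
      - replace (z + 1)%Z with 0%Z by lia. rewrite per_zero.
        change 0%Z with (Z.of_nat 0). rewrite rseq_nat. apply fwd_0. }
    rewrite E1, E2. apply per_props; auto.
  - replace z with (Z.of_nat (Z.to_nat z)) by lia. set (n := Z.to_nat z).
    replace (Z.of_nat n + 1)%Z with (Z.of_nat (S n)) by lia. rewrite !rseq_nat.
    assert (Ha : (a < k)%nat) by (apply (vd_lt k A a (F 0%nat)); apply Hl0).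
    pose proof (pref_len k A a m rho F (S (S n)) Hm HF).
    rewrite (fwd_eq k A a m rho F n (S (S n))), (fwd_eq k A a m rho F (S n) (S (S n))) by (auto; lia).
    pose proof (pref_vd k A a m rho F (S (S n)) Hm Ha HF).
    split.
    + apply nth_vd with (A := A); auto. lia.
    + apply vd_edge with (k := k); auto. lia.
Qed.

Lemma find_t k A a m rho F : (0 < m)%nat -> loops_ok k A a m F -> forall n,
  exists t, (length (pref m rho F t) <= n < length (pref m rho F (S t)))%nat.
Proof.
  intros Hm HF n. induction n as [|n [t Ht]].
  - exists 0%nat. pose proof (pref_len k A a m rho F 1 Hm HF). split; [simpl; lia|exact H].
  - destruct (Nat.eq_dec (S n) (length (pref m rho F (S t)))) as [E|Hne].
    + exists (S t). pose proof (HF _ (amax_lt m (fun j => rho j * INR (S (S t)) - INR (cnt m rho (S t) j)) Hm)) as [_ [Hl _]].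
      change (pref m rho F (S (S t))) with (pref m rho F (S t) ++ F (Jg m rho (S t))).
      rewrite length_app. unfold Jg. lia.
    + exists t. lia.
Qed.

Lemma lw_neg w x l : lw (fun a b => (- w a b)%Z) x l = (- lw w x l)%Z.
Proof. revert x; induction l; intros; simpl; [auto|]. rewrite IHl. lia. Qed.

Lemma wB_neg k w : wB k (fun a b => (- w a b)%Z) = wB k w.
Proof. unfold wB. f_equal. extensionality x. f_equal. extensionality y. lia. Qed.

Definition Bh k (h : nat -> nat -> vecZ) i := wB k (fun a b => h a b i).

Lemma vw_abs k A h x l i : vd k A x l -> Rabs (IZR (vw h x l i)) <= INR (length l) * IZR (Bh k h i).
Proof.
  intros Hv. rewrite vw_lw. unfold Bh.
  pose proof (lw_bound k A (fun a b => h a b i) x l Hv).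
  pose proof (lw_bound k A (fun a b => (- h a b i)%Z) x l Hv). rewrite lw_neg, wB_neg in H0.
  rewrite INR_IZR_INZ, <- mult_IZR. apply Rabs_le. rewrite <- opp_IZR. split; apply IZR_le; lia.
Qed.

Lemma Bh_nonneg k h i : (0 <= Bh k h i)%Z.
Proof. unfold Bh, wB. apply sumN_nonneg; intros; apply sumN_nonneg; intros; lia. Qed.

Theorem RL k A (h : nat -> nat -> vecZ) d a m F (lam : nat -> R) :
  (0 < m)%nat -> loops_ok k A a m F -> (forall j, (j < m)%nat -> 0 <= lam j) ->
  sum_lt m (fun j => lam j * INR (length (F j))) = 1 ->
  let rho := fun j => lam j / sum_lt m lam in
  inSigma k A (rseq a m rho F) /\
  has_rot d h (rseq a m rho F) (fun i => sum_lt m (fun j => lam j * IZR (vw h a (F j) i))).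
Proof.
  intros Hm HF Hlam Hsum rho. split; [apply rseq_inSigma; auto|].
  set (Nmax := sum_lt m (fun j => INR (length (F j)))).
  assert (HnN : forall j, (j < m)%nat -> INR (length (F j)) <= Nmax)
    by (intros; apply (sum_lt_ge_term m (fun j => INR (length (F j)))); auto; intros; apply pos_INR).
  set (Lam := sum_lt m lam).
  assert (HLam : 0 < Lam).
  { assert (sum_lt m (fun j => lam j * INR (length (F j))) <= sum_lt m (fun j => Nmax * lam j)).
    { apply sum_lt_le. intros j Hj. pose proof (HnN j Hj). pose proof (Hlam j Hj). nra. }
    rewrite sum_lt_scal, Hsum in H. fold Lam in H.
    assert (0 <= Lam) by (apply sum_lt_nonneg; auto). destruct (Req_dec Lam 0); [|lra].
    rewrite H1 in H. lra. }
  assert (Hrho : forall j, (j < m)%nat -> 0 <= rho j) by (intros; unfold rho; unfold Rdiv; apply Rmult_le_pos; [auto|apply Rlt_le, Rinv_0_lt_compat; auto]).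
  assert (Hsrho : sum_lt m rho = 1).
  { unfold rho. rewrite (sum_lt_ext _ _ (fun j => / Lam * lam j)) by (intros; unfold Rdiv; fold Lam; lra).
    rewrite sum_lt_scal. fold Lam. field. lra. }
  intros i _.
  set (V := fun j => IZR (vw h a (F j) i)).
  set (y := sum_lt m (fun j => lam j * V j)).
  set (K := INR m * sum_lt m (fun j => Rabs (V j)) + Rabs y * INR m * Nmax + Nmax * IZR (Bh k h i) + Nmax * Rabs y).
  assert (Hbound : forall n, Rabs (IZR (hsum h (rseq a m rho F) n i) - INR n * y) <= K).
  { intros n. destruct (find_t k A a m rho F Hm HF n) as [t [Ht1 Ht2]].
    set (J := Jg m rho t).
    assert (HJ : (J < m)%nat) by (apply amax_lt; auto).
    set (P := pref m rho F t).
    assert (HPS : pref m rho F (S t) = P ++ F J) by reflexivity.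
    set (r := (n - length P)%nat). change (length P <= n)%nat in Ht1.
    rewrite HPS, length_app in Ht2.
    assert (Hw : walk_of (rseq a m rho F) n = P ++ firstn r (F J)).
    { rewrite (walk_of_eq _ n a (pref m rho F (S t))).
      - rewrite HPS, firstn_app. rewrite firstn_all2 by lia. reflexivity.
      - rewrite HPS, length_app. lia.
      - intros j Hj. rewrite rseq_nat. apply (fwd_eq k A); auto. rewrite HPS, length_app. lia. }
    rewrite hsum_walk. change 0%Z with (Z.of_nat 0). rewrite rseq_nat, fwd_0, Hw, vw_app.
    assert (Hlast : last P a = a) by (apply (pref_last k A); auto). rewrite Hlast.
    unfold vadd. rewrite plus_IZR. unfold P. rewrite (pref_vw k A) by auto.
    assert (Hn : INR n = sum_lt m (fun j => INR (cnt m rho t j) * INR (length (F j))) + INR r).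
    { rewrite <- (pref_length m rho F t Hm), <- plus_INR. f_equal. fold P. lia. }
    rewrite Hn.
    assert (Ha : (a < k)%nat) by (apply (vd_lt k A a (F 0%nat)); apply (HF 0%nat Hm)).
    assert (HvJ : vd k A a (firstn r (F J))).
    { pose proof (proj1 (HF J HJ)) as H0. rewrite <- (firstn_skipn r (F J)) in H0. apply vd_app in H0. tauto. }
    assert (Hr : INR r <= Nmax).
    { eapply Rle_trans; [|apply (HnN J HJ)]. apply le_INR. unfold r. lia. }
    pose proof (vw_abs k A h a (firstn r (F J)) i HvJ) as HPb.
    assert (HPb2 : Rabs (IZR (vw h a (firstn r (F J)) i)) <= Nmax * IZR (Bh k h i)).
    { eapply Rle_trans; [exact HPb|]. apply Rmult_le_compat_r; [apply IZR_le, Bh_nonneg|].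
      eapply Rle_trans; [|exact Hr]. apply le_INR. rewrite length_firstn. lia. }
    set (Pi := IZR (vw h a (firstn r (F J)) i)) in *.
    set (T := INR t).
    set (c := fun j => INR (cnt m rho t j)).
    assert (Hc : forall j, (j < m)%nat -> Rabs (c j - rho j * T) <= INR m)
      by (intros; apply disc_bound; auto).
    assert (E1 : sum_lt m (fun j => c j * V j) =
                 sum_lt m (fun j => (c j - rho j * T) * V j) + T / Lam * y).
    { unfold y. rewrite <- sum_lt_scal, <- sum_lt_plus. apply sum_lt_ext. intros j Hj. unfold rho. fold Lam. field. lra. }
    assert (E2 : sum_lt m (fun j => c j * INR (length (F j))) =
                 sum_lt m (fun j => (c j - rho j * T) * INR (length (F j))) + T / Lam * 1).
    { rewrite <- Hsum. rewrite <- sum_lt_scal, <- sum_lt_plus. apply sum_lt_ext. intros j Hj. unfold rho. fold Lam. field. lra. }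
    change (sum_lt m (fun j => INR (cnt m rho t j) * IZR (vw h a (F j) i))) with (sum_lt m (fun j => c j * V j)).
    change (sum_lt m (fun j => INR (cnt m rho t j) * INR (length (F j)))) with (sum_lt m (fun j => c j * INR (length (F j)))).
    rewrite E1, E2.
    set (S1 := sum_lt m (fun j => (c j - rho j * T) * V j)).
    set (S2 := sum_lt m (fun j => (c j - rho j * T) * INR (length (F j)))).
    assert (HS1 : Rabs S1 <= INR m * sum_lt m (fun j => Rabs (V j))).
    { eapply Rle_trans; [apply sum_lt_abs|]. rewrite <- sum_lt_scal. apply sum_lt_le. intros j Hj.
      rewrite Rabs_mult. apply Rmult_le_compat_r; [apply Rabs_pos|auto]. }
    assert (HS2 : Rabs S2 <= INR m * Nmax).
    { eapply Rle_trans; [apply sum_lt_abs|]. unfold Nmax. rewrite <- sum_lt_scal. apply sum_lt_le. intros j Hj.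
      rewrite Rabs_mult, (Rabs_right (INR _)) by (apply Rle_ge, pos_INR).
      apply Rmult_le_compat_r; [apply pos_INR|auto]. }
    replace (S1 + T / Lam * y + Pi - (S2 + T / Lam * 1 + INR r) * y) with (S1 - S2 * y + Pi - INR r * y) by ring.
    unfold K.
    assert (Rabs (S2 * y) <= Rabs y * INR m * Nmax).
    { rewrite Rabs_mult. pose proof (Rabs_pos y). pose proof (Rabs_pos S2). nra. }
    assert (Rabs (INR r * y) <= Nmax * Rabs y).
    { rewrite Rabs_mult, (Rabs_right (INR r)) by (apply Rle_ge, pos_INR). pose proof (Rabs_pos y). nra. }
    pose proof (Rabs_triang (S1 - S2 * y + Pi) (- (INR r * y))).
    pose proof (Rabs_triang (S1 - S2 * y) Pi).
    pose proof (Rabs_triang S1 (- (S2 * y))).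
    rewrite Rabs_Ropp in *. unfold Rminus in *. lra. }
  intros eps Heps.
  assert (HK : 0 <= K) by (specialize (Hbound 0%nat); pose proof (Rabs_pos (IZR (hsum h (rseq a m rho F) 0 i) - INR 0 * y)); lra).
  destruct (archimed (K / eps)) as [Harch _].
  exists (S (Z.to_nat (up (K / eps)))). intros n Hn. unfold Rdist.
  assert (Hnpos : 0 < INR n) by (apply lt_0_INR; lia).
  assert (HnK : K / eps < INR n).
  { eapply Rlt_le_trans; [exact Harch|]. rewrite INR_IZR_INZ. apply IZR_le.
    destruct (Z_lt_le_dec (up (K / eps)) 0); lia. }
  change (Rabs (IZR (hsum h (rseq a m rho F) n i) / INR n - y) < eps).
  replace (IZR (hsum h (rseq a m rho F) n i) / INR n - y) with ((IZR (hsum h (rseq a m rho F) n i) - INR n * y) / INR n)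
    by (field; lra).
  unfold Rdiv at 1. rewrite Rabs_mult, (Rabs_right (/ INR n)) by (apply Rle_ge, Rlt_le, Rinv_0_lt_compat; lra).
  specialize (Hbound n).
  apply Rle_lt_trans with (K * / INR n).
  { apply Rmult_le_compat_r; [apply Rlt_le, Rinv_0_lt_compat; lra|auto]. }
  apply (Rmult_lt_reg_r (INR n)); [lra|]. rewrite Rmult_assoc, Rinv_l by lra.
  apply (Rmult_lt_reg_r (/ eps)); [apply Rinv_0_lt_compat; lra|].
  replace (eps * INR n * / eps) with (INR n) by (field; lra). unfold Rdiv in HnK. lra.
Qed.

Open Scope R_scope.

Fixpoint repc (q : list nat) (t : nat) : list nat :=
  match t with O => [] | S t' => repc q t' ++ q end.

Lemma repc_len q t : length (repc q t) = (t * length q)%nat.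
Proof. induction t; simpl; [auto|]. rewrite length_app, IHt. lia. Qed.

Lemma repc_last q t a : last q a = a -> last (repc q t) a = a.
Proof. intros H; induction t; simpl; [auto|]. rewrite last_app, IHt. auto. Qed.

Lemma nth_rep k A a q : isloop k A a q -> forall T j, (j <= T * length q)%nat ->
  nth j (a :: repc q T) 0%nat = per a q (Z.of_nat j).
Proof.
  intros [Hv [Hl Hlast]]. induction T as [|T IH]; intros j Hj.
  - simpl in Hj. replace j with 0%nat by lia. rewrite per_zero. reflexivity.
  - simpl repc. destruct (le_lt_dec j (T * length q)) as [Hle|Hgt].
    + rewrite <- nth_prefix by (rewrite repc_len; lia). apply IH; auto.
    + rewrite app_comm_cons, app_nth2 by (simpl; rewrite repc_len; lia). simpl length. rewrite repc_len.
      unfold per. set (n0 := length q).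
      set (r := (j - S (T * n0))%nat).
      assert (Hr : (r < n0)%nat) by (unfold r; simpl in Hj; lia).
      destruct (Nat.eq_dec (S r) n0) as [E|Hne].
      * assert (Z.of_nat j mod Z.of_nat n0 = 0)%Z.
        { symmetry. apply Z.mod_unique_pos with (q := Z.of_nat (S T)); [lia|]. unfold r in E. lia. }
        rewrite H. simpl. destruct (exists_last (l := q)) as [l' [z Hz]]. { intro E'; subst; simpl in Hl; lia. }
        unfold n0 in *. rewrite Hz in Hlast |- *. rewrite last_last in Hlast. subst z.
        rewrite Hz, length_app in E. simpl in E. rewrite app_nth2 by lia. replace (r - length l')%nat with 0%nat by lia. auto.
      * assert (Z.of_nat j mod Z.of_nat n0 = Z.of_nat (S r))%Z.
        { symmetry. apply Z.mod_unique_pos with (q := Z.of_nat T); [lia|]. unfold r. simpl in Hj. lia. }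
        rewrite H, Nat2Z.id. reflexivity.
Qed.

Lemma rseq_m1 k A a q rho : isloop k A a q -> rseq a 1 rho (fun _ => q) = per a q.
Proof.
  intros Hq. extensionality z. unfold rseq. destruct (Z.ltb_spec z 0); [reflexivity|].
  unfold fwd. assert (Hp : forall t, pref 1 rho (fun _ => q) t = repc q t) by (induction t; simpl; congruence).
  rewrite Hp. rewrite (nth_rep k A) by (auto; destruct Hq as [_ [Hl _]]; nia). f_equal. lia.
Qed.

Lemma per_periodic a q : (1 <= length q)%nat -> periodic (per a q) (length q).
Proof. intros H m. unfold per. f_equal. f_equal. replace (m + Z.of_nat (length q))%Z with (m + 1 * Z.of_nat (length q))%Z by lia.
  apply Z.mod_add. lia. Qed.

Lemma per_inSigma k A a q : isloop k A a q -> inSigma k A (per a q).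
Proof. intros H z. apply per_props; auto. Qed.

Lemma Lhat_lin d L (x : vecR) c (v : vecZ) : is_hom d L -> (forall i, x i = c * IZR (v i)) ->
  Lhat d L x = c * IZR (L v).
Proof.
  intros HL Hx. rewrite (hom_decomp d L v HL), IZR_sumN. unfold Lhat.
  rewrite (sum_lt_ext _ _ (fun i => c * IZR (L (unitZ i) * v i)%Z)) by (intros; rewrite Hx, mult_IZR; ring).
  apply sum_lt_scal.
Qed.

Lemma loop_rot k A h d L a q : is_hom d L -> isloop k A a q ->
  exists x, has_rot d h (per a q) x /\ Lhat d L x = / INR (length q) * IZR (lw (fun u v => L (h u v)) a q).
Proof.
  intros HL Hq. assert (Hlen : 0 < INR (length q)) by (apply lt_0_INR; destruct Hq as [_ [Hl _]]; lia).
  pose proof (RL k A h d a 1 (fun _ => q) (fun _ => / INR (length q)) ltac:(lia)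
    ltac:(intros j Hj; exact Hq) ltac:(intros; apply Rlt_le, Rinv_0_lt_compat; auto)
    ltac:(simpl; field; lra)) as [_ Hrot].
  rewrite (rseq_m1 k A) in Hrot by auto.
  eexists; split; [exact Hrot|].
  rewrite <- (L_vw d L h a q HL). apply Lhat_lin; auto. intros i. simpl. ring.
Qed.

Open Scope R_scope.

Lemma wB_nonneg k w : (0 <= wB k w)%Z.
Proof. unfold wB. apply sumN_nonneg; intros; apply sumN_nonneg; intros; lia. Qed.

Lemma pos_loop k A h d L s n : is_hom d L -> inSigma k A s ->
  (L (hsum h s n) > Z.of_nat k * wB k (fun u v => L (h u v)))%Z ->
  exists y q, isloop k A y q /\ (length q <= k)%nat /\ (lw (fun u v => L (h u v)) y q > 0)%Z.
Proof.
  intros HL HS H. rewrite hsum_walk, (L_vw d L) in H by auto.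
  destruct (walk_decomp k A (fun u v => L (h u v)) n (s 0%Z) (walk_of s n) (walk_of_length s n) (walk_of_vd k A s n HS))
    as [HL'|HR]; [exact HL'|lia].
Qed.

Lemma neg_loop k A h d L s n : is_hom d L -> inSigma k A s ->
  (L (hsum h s n) < - (Z.of_nat k * wB k (fun u v => L (h u v))))%Z ->
  exists y q, isloop k A y q /\ (length q <= k)%nat /\ (lw (fun u v => L (h u v)) y q < 0)%Z.
Proof.
  intros HL HS H. rewrite hsum_walk, (L_vw d L) in H by auto.
  destruct (walk_decomp k A (fun u v => (- L (h u v))%Z) n (s 0%Z) (walk_of s n) (walk_of_length s n) (walk_of_vd k A s n HS))
    as [[y [q [H1 [H2 H3]]]]|HR].
  - exists y, q. rewrite lw_neg in H3. split; auto. split; auto. lia.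
  - rewrite lw_neg, wB_neg in HR. lia.
Qed.

Lemma part1 k A d h L : is_hom d L ->
     exists C : R, C > 0 /\
       (forall (s : Z -> nat) (n : nat), inSigma k A s -> (0 < n)%nat ->
          IZR (L (hsum h s n)) > C ->
          exists (s' : Z -> nat) (n' : nat), inSigma k A s' /\ (0 < n')%nat /\
            periodic s' n' /\ exists x, has_rot d h s' x /\ Lhat d L x > 0) /\
       (forall (s : Z -> nat) (n : nat), inSigma k A s -> (0 < n)%nat ->
          IZR (L (hsum h s n)) < - C ->
          exists s'' : Z -> nat, inSigma k A s'' /\
            exists x, has_rot d h s'' x /\ Lhat d L x < 0).
Proof.
  intros HL. set (B := (Z.of_nat k * wB k (fun u v => L (h u v)))%Z).
  assert (HB : (0 <= B)%Z) by (unfold B; pose proof (wB_nonneg k (fun u v => L (h u v))); lia).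
  exists (IZR B + 1). split; [apply IZR_le in HB; lra|]. split.
  - intros s n HS Hn Hgt.
    assert (Hz : (L (hsum h s n) > B)%Z) by (apply Z.lt_gt, lt_IZR; lra).
    destruct (pos_loop k A h d L s n HL HS Hz) as [y [q [Hq [_ Hpos]]]].
    exists (per y q), (length q). split; [apply per_inSigma; auto|]. split; [apply Hq|].
    split; [apply per_periodic, Hq|].
    destruct (loop_rot k A h d L y q HL Hq) as [x [Hx Hlx]]. exists x. split; auto. rewrite Hlx.
    assert (0 < INR (length q)) by (apply lt_0_INR; destruct Hq as [_ [? _]]; lia).
    apply Rmult_lt_0_compat; [apply Rinv_0_lt_compat; auto|]. apply IZR_lt. lia.
  - intros s n HS Hn Hlt.
    assert (Hz : (L (hsum h s n) < - B)%Z) by (apply lt_IZR; rewrite opp_IZR; lra).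
    destruct (neg_loop k A h d L s n HL HS Hz) as [y [q [Hq [_ Hneg]]]].
    exists (per y q). split; [apply per_inSigma; auto|].
    destruct (loop_rot k A h d L y q HL Hq) as [x [Hx Hlx]]. exists x. split; auto. rewrite Hlx.
    assert (0 < INR (length q)) by (apply lt_0_INR; destruct Hq as [_ [? _]]; lia).
    assert (IZR (lw (fun u v => L (h u v)) y q) < 0) by (apply IZR_lt; lia).
    assert (0 < / INR (length q)) by (apply Rinv_0_lt_compat; auto). nra.
Qed.

Lemma CV_sum d (a : nat -> R) (u : nat -> nat -> R) (l : nat -> R) :
  (forall i, (i < d)%nat -> Un_cv (u i) (l i)) ->
  Un_cv (fun n => sum_lt d (fun i => a i * u i n)) (sum_lt d (fun i => a i * l i)).
Proof.
  induction d as [|d IH]; intros H.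
  - simpl. intros eps He. exists 0%nat. intros. unfold R_dist. rewrite Rminus_diag, Rabs_R0. lra.
  - simpl. apply CV_plus; [apply IH; intros; apply H; lia|].
    apply CV_mult; [|apply H; lia]. intros eps He. exists 0%nat. intros. unfold R_dist. rewrite Rminus_diag, Rabs_R0. lra.
Qed.

Lemma part2_fwd k A d h : in_interior d (rot_set d k A h) (fun _ => 0) ->
  forall L : vecZ -> Z, is_hom d L -> surjZ L ->
      forall M : Z, exists (s : Z -> nat) (m : nat), inSigma k A s /\ (L (hsum h s m) > M)%Z.
Proof.
  intros [eps [Heps Hint]] L HL HLs M.
  destruct (HLs 1%Z) as [v Hv].
  set (a := fun i => IZR (L (unitZ i))).
  set (S2 := sum_lt d (fun i => a i * a i)).
  assert (HS2 : 0 < S2).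
  { rewrite (hom_decomp d L v HL) in Hv.
    destruct (classic (exists i, (i < d)%nat /\ a i <> 0)) as [[i [Hi Hai]]|Hn].
    - apply (sum_lt_pos d (fun i => a i * a i) i); auto; [intros; nra|]. nra.
    - exfalso. assert (sumN d (fun i => (L (unitZ i) * v i)%Z) = 0%Z); [|lia].
      apply eq_IZR. rewrite IZR_sumN. replace 0 with (sum_lt d (fun _ => 0)) by (rewrite sum_lt_const; lra).
      apply sum_lt_ext. intros i Hi. rewrite mult_IZR.
      assert (a i = 0) by (apply NNPP; intro; apply Hn; exists i; auto). unfold a in H. rewrite H. lra. }
  set (Q := 1 + sum_lt d (fun i => Rabs (a i))).
  assert (HQ : 1 <= Q) by (unfold Q; pose proof (sum_lt_nonneg d (fun i => Rabs (a i)) ltac:(intros; apply Rabs_pos)); lra).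
  set (del := eps / (2 * Q)).
  assert (Hdel : 0 < del) by (unfold del; apply Rdiv_lt_0_compat; lra).
  set (y := fun i => del * a i).
  destruct (Hint y) as [s [HS Hrot]].
  { intros i Hi. unfold y. rewrite Rminus_0_r, Rabs_mult, (Rabs_right del) by lra.
    assert (Rabs (a i) <= Q - 1) by (unfold Q; ring_simplify; apply (sum_lt_ge_term d (fun i => Rabs (a i))); auto; intros; apply Rabs_pos).
    assert (del * Q = eps / 2) by (unfold del; field; lra). nra. }
  set (c := sum_lt d (fun i => a i * y i)).
  assert (Hc : c = del * S2) by (unfold c, S2, y; rewrite <- sum_lt_scal; apply sum_lt_ext; intros; ring).
  assert (Hcp : 0 < c) by (rewrite Hc; apply Rmult_lt_0_compat; auto).
  assert (Hcv := CV_sum d a (fun i n => IZR (hsum h s n i) / INR n) y (fun i Hi => Hrot i Hi)).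
  destruct (Hcv (c / 2) ltac:(lra)) as [N HN].
  destruct (archimed (2 * Rabs (IZR M) / c)) as [Har _].
  set (n := (S N + Z.to_nat (up (2 * Rabs (IZR M) / c)))%nat).
  exists s, n. split; auto.
  specialize (HN n ltac:(unfold n; lia)). unfold R_dist in HN. fold c in HN.
  apply Rabs_def2 in HN. destruct HN as [_ HN].
  assert (Hn : 0 < INR n) by (apply lt_0_INR; unfold n; lia).
  assert (E : sum_lt d (fun i => a i * (IZR (hsum h s n i) / INR n)) = IZR (L (hsum h s n)) / INR n).
  { rewrite (hom_decomp d L _ HL), IZR_sumN. unfold Rdiv. rewrite Rmult_comm, <- sum_lt_scal.
    apply sum_lt_ext. intros i Hi. rewrite mult_IZR. unfold a. ring. }
  rewrite E in HN.
  assert (Hbig : 2 * Rabs (IZR M) / c < INR n).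
  { eapply Rlt_le_trans; [exact Har|]. unfold n. rewrite plus_INR, INR_IZR_INZ, INR_IZR_INZ.
    assert (Hup : (up (2 * Rabs (IZR M) / c) <= Z.of_nat (Z.to_nat (up (2 * Rabs (IZR M) / c))))%Z) by lia.
    apply IZR_le in Hup. pose proof (pos_INR (S N)). rewrite INR_IZR_INZ in H. eapply Rle_trans; [exact Hup|]. lra. }
  apply Z.lt_gt, lt_IZR.
  assert (IZR (L (hsum h s n)) / INR n > c / 2) by lra.
  assert (IZR (L (hsum h s n)) > INR n * (c / 2)).
  { apply (Rmult_gt_compat_l (INR n)) in H; [|lra]. replace (INR n * (IZR (L (hsum h s n)) / INR n)) with (IZR (L (hsum h s n))) in H by (field; lra). auto. }
  assert (INR n * (c / 2) > Rabs (IZR M)).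
  { unfold Rdiv in Hbig. apply (Rmult_lt_compat_r (c / 2)) in Hbig; [|lra].
    replace (2 * Rabs (IZR M) * / c * (c / 2)) with (Rabs (IZR M)) in Hbig by (field; lra). lra. }
  pose proof (Rle_abs (IZR M)). lra.
Qed.

Open Scope Z_scope.

Fixpoint dot (d : nat) (u v : vecZ) : Z :=
  match d with O => 0 | S d' => dot d' u v + u d' * v d' end.

Inductive incone (vs : list vecZ) : vecZ -> Prop :=
| ic0 : incone vs vzero
| icadd : forall v w, In v vs -> incone vs w -> incone vs (vadd v w).

Lemma incone_add vs u w : incone vs u -> incone vs w -> incone vs (vadd u w).
Proof. induction 1; intros Hw.
  - replace (vadd vzero w) with w by (extensionality i; unfold vadd, vzero; lia). auto.
  - replace (vadd (vadd v w0) w) with (vadd v (vadd w0 w)) by (extensionality i; unfold vadd; lia).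
    constructor; auto. Qed.

Lemma incone_nat vs u n : incone vs u -> incone vs (vscale (Z.of_nat n) u).
Proof. intros H. induction n.
  - replace (vscale (Z.of_nat 0) u) with vzero by (extensionality i; unfold vscale, vzero; lia). constructor.
  - replace (vscale (Z.of_nat (S n)) u) with (vadd u (vscale (Z.of_nat n) u)) by (extensionality i; unfold vscale, vadd; lia).
    apply incone_add; auto. Qed.

Lemma incone_in vs v : In v vs -> incone vs v.
Proof. intros H. replace v with (vadd v vzero) by (extensionality i; unfold vadd, vzero; lia). constructor; auto. constructor. Qed.

Lemma incone_sub vs S u : (forall w, In w S -> incone vs w) -> incone S u -> incone vs u.
Proof. intros HS. induction 1; [constructor|]. apply incone_add; auto. Qed.

Lemma incone_coord0 S u c : (forall w, In w S -> w c = 0) -> incone S u -> u c = 0.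
Proof. intros HS. induction 1; [reflexivity|]. unfold vadd. rewrite HS by auto. lia. Qed.

Lemma dot_ext d u u' v v' : (forall i, (i < d)%nat -> u i = u' i /\ v i = v' i) -> dot d u v = dot d u' v'.
Proof. induction d; intros H; simpl; [auto|]. rewrite IHd by (intros; apply H; lia).
  destruct (H d ltac:(lia)) as [-> ->]. auto. Qed.

Lemma dot_scale_l d z u v : dot d (vscale z u) v = z * dot d u v.
Proof. induction d; simpl; [lia|]. rewrite IHd. unfold vscale. ring. Qed.

Lemma dot_add_r d u v w : dot d u (vadd v w) = dot d u v + dot d u w.
Proof. induction d; simpl; [lia|]. rewrite IHd. unfold vadd. ring. Qed.

Lemma dot_scale_r d z u v : dot d u (vscale z v) = z * dot d u v.
Proof. induction d; simpl; [lia|]. rewrite IHd. unfold vscale. ring. Qed.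

Lemma dot_unit d v : dot (S d) (unitZ d) v = v d.
Proof. simpl. assert (dot d (unitZ d) v = 0) as ->; [|unfold unitZ; rewrite Nat.eqb_refl; lia].
  assert (forall e, (e <= d)%nat -> dot e (unitZ d) v = 0); [|auto].
  induction e; intros He; simpl; [auto|]. rewrite IHe by lia. unfold unitZ.
  destruct (Nat.eqb_spec e d); [lia|lia]. Qed.

Fixpoint prodabs (d : nat) (vs : list vecZ) : Z :=
  match vs with
  | [] => 1
  | v :: vs' => if Z.eqb (v d) 0 then prodabs d vs' else Z.abs (v d) * prodabs d vs'
  end.

Lemma prodabs_pos d vs : 0 < prodabs d vs.
Proof. induction vs as [|v vs IH]; simpl; [lia|]. destruct (Z.eqb_spec (v d) 0); lia. Qed.

Lemma prodabs_div d vs v : In v vs -> v d <> 0 -> (v d | prodabs d vs).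
Proof. induction vs as [|w vs IH]; intros Hin Hne; [destruct Hin|]. simpl.
  destruct Hin as [->|Hin].
  - destruct (Z.eqb_spec (v d) 0); [lia|]. apply Z.divide_mul_l. apply Z.divide_abs_r. apply Z.divide_refl.
  - destruct (Z.eqb_spec (w d) 0); [auto|]. apply Z.divide_mul_r. auto. Qed.

Lemma between (los ups : list Z) : (forall l u, In l los -> In u ups -> l <= u) ->
  exists t, (forall l, In l los -> l <= t) /\ (forall u, In u ups -> t <= u).
Proof.
  intros H. set (m0 := fold_right Z.min 0 ups).
  assert (Hm0 : forall u, In u ups -> m0 <= u).
  { unfold m0. clear. induction ups; intros u Hu; [destruct Hu|]. simpl. destruct Hu as [->|Hu]; [lia|].
    specialize (IHups u Hu). lia. }
  exists (fold_right Z.max m0 los). split.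
  - clear H. induction los; intros l Hl; [destruct Hl|]. simpl. destruct Hl as [->|Hl]; [lia|]. specialize (IHlos l Hl). lia.
  - intros u Hu. induction los; simpl; [auto|]. assert (a <= u) by (apply H; simpl; auto).
    assert (fold_right Z.max m0 los <= u) by (apply IHlos; intros; apply H; simpl; auto). lia.
Qed.

Definition comb (d : nat) (p q : vecZ) : vecZ := vadd (vscale (- q d) p) (vscale (p d) q).

Definition FMset (d : nat) (vs : list vecZ) : list vecZ :=
  filter (fun v => Z.eqb (v d) 0) vs ++
  flat_map (fun p => flat_map (fun q => if andb (0 <? p d) (q d <? 0) then [comb d p q] else []) vs) vs.

Lemma FMset_in d vs w : In w (FMset d vs) ->
  (In w vs /\ w d = 0) \/ (exists p q, In p vs /\ In q vs /\ 0 < p d /\ q d < 0 /\ w = comb d p q).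
Proof.
  unfold FMset. intros H. apply in_app_or in H. destruct H as [H|H].
  - left. apply filter_In in H. destruct H as [H1 H2]. apply Z.eqb_eq in H2. auto.
  - right. apply in_flat_map in H. destruct H as [p [Hp H]]. apply in_flat_map in H. destruct H as [q [Hq H]].
    destruct (Z.ltb_spec 0 (p d)), (Z.ltb_spec (q d) 0); simpl in H; try tauto.
    destruct H as [<-|[]]. exists p, q. auto.
Qed.

Lemma FMset_zero d vs v : In v vs -> v d = 0 -> In v (FMset d vs).
Proof. intros H1 H2. unfold FMset. apply in_or_app. left. apply filter_In. split; auto. apply Z.eqb_eq; auto. Qed.

Lemma FMset_comb d vs p q : In p vs -> In q vs -> 0 < p d -> q d < 0 -> In (comb d p q) (FMset d vs).
Proof. intros. unfold FMset. apply in_or_app. right. apply in_flat_map. exists p. split; auto.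
  apply in_flat_map. exists q. split; auto. destruct (Z.ltb_spec 0 (p d)), (Z.ltb_spec (q d) 0); try lia. simpl; auto. Qed.

Lemma FMset_last d vs w : In w (FMset d vs) -> w d = 0.
Proof. intros H. apply FMset_in in H. destruct H as [[_ H]|[p [q [_ [_ [_ [_ ->]]]]]]]; auto.
  unfold comb, vadd, vscale. ring. Qed.

Lemma FMset_cone d vs w : In w (FMset d vs) -> incone vs w.
Proof. intros H. apply FMset_in in H. destruct H as [[H _]|[p [q [Hp [Hq [Hpd [Hqd ->]]]]]]].
  - apply incone_in; auto.
  - unfold comb. replace (- q d) with (Z.of_nat (Z.to_nat (- q d))) by lia.
    replace (p d) with (Z.of_nat (Z.to_nat (p d))) by lia.
    apply incone_add; apply incone_nat, incone_in; auto. Qed.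

Definition nonzero (d : nat) (phi : vecZ) := exists i, (i < d)%nat /\ phi i <> 0.

Definition cone_hyp (d : nat) (vs : list vecZ) :=
  forall phi, nonzero d phi -> exists v, In v vs /\ dot d phi v > 0.

Lemma FM_hyp d vs : cone_hyp (S d) vs -> cone_hyp d (FMset d vs).
Proof.
  intros H psi Hpsi. apply NNPP. intros Hn.
  assert (Hle : forall w, In w (FMset d vs) -> dot d psi w <= 0).
  { intros w Hw. apply Z.nlt_ge. intro. apply Hn. exists w. split; auto. lia. }
  set (N := prodabs d vs). assert (HN : 0 < N) by apply prodabs_pos.
  set (av := fun v => dot d psi v).
  set (los := map (fun q => av q * (N / (- q d))) (filter (fun q => q d <? 0) vs)).
  set (ups := map (fun p => - av p * (N / p d)) (filter (fun p => 0 <? p d) vs)).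
  assert (Hdivp : forall p, In p vs -> 0 < p d -> p d * (N / p d) = N).
  { intros p Hp Hpd. destruct (prodabs_div d vs p Hp ltac:(lia)) as [z Hz]. fold N in Hz.
    rewrite Hz. rewrite Z.div_mul by lia. ring. }
  assert (Hdivq : forall q, In q vs -> q d < 0 -> (- q d) * (N / (- q d)) = N).
  { intros q Hq Hqd. destruct (prodabs_div d vs q Hq ltac:(lia)) as [z Hz]. fold N in Hz.
    rewrite Hz. replace (z * q d) with ((- z) * (- q d)) by ring. rewrite Z.div_mul by lia. ring. }
  destruct (between los ups) as [t [Ht1 Ht2]].
  { intros l u Hl Hu. unfold los, ups in *. apply in_map_iff in Hl, Hu.
    destruct Hl as [q [<- Hq]]. destruct Hu as [p [<- Hp]]. apply filter_In in Hq, Hp.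
    destruct Hq as [Hq Hqd]. destruct Hp as [Hp Hpd]. apply Z.ltb_lt in Hqd, Hpd.
    pose proof (Hle _ (FMset_comb d vs p q Hp Hq Hpd Hqd)) as Hc.
    unfold comb in Hc. rewrite dot_add_r, !dot_scale_r in Hc. fold (av p) (av q) in Hc.
    pose proof (Hdivp p Hp Hpd) as E1. pose proof (Hdivq q Hq Hqd) as E2.
    set (Xp := N / p d) in *. set (Xq := N / - q d) in *. set (cp := p d) in *. set (cq := - q d) in *.
    assert (E : (av q * Xq + av p * Xp) * (cp * cq) = N * (cp * av q + cq * av p)).
    { transitivity (av q * cp * (cq * Xq) + av p * cq * (cp * Xp)); [ring|]. rewrite E1, E2. ring. }
    assert (0 < cp * cq) by nia. assert (N * (cp * av q + cq * av p) <= 0) by nia.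
    assert (av q * Xq + av p * Xp <= 0) by nia. lia. }
  set (phi := fun i => if Nat.ltb i d then N * psi i else if Nat.eqb i d then t else 0).
  assert (Hdphi : forall v, dot (S d) phi v = N * av v + t * v d).
  { intros v. simpl. unfold phi at 2. rewrite Nat.ltb_irrefl, Nat.eqb_refl.
    rewrite (dot_ext d phi (vscale N psi) v v) by (intros i Hi; unfold phi, vscale; destruct (Nat.ltb_spec i d); [auto|lia]).
    rewrite dot_scale_l. auto. }
  destruct (H phi) as [v [Hv Hpos]].
  { destruct Hpsi as [i [Hi Hpi]]. exists i. split; [lia|]. unfold phi. destruct (Nat.ltb_spec i d); [|lia]. nia. }
  rewrite Hdphi in Hpos.
  destruct (Z.lt_trichotomy (v d) 0) as [Hvd|[Hvd|Hvd]].
  - assert (Hl : av v * (N / - v d) <= t).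
    { apply Ht1. unfold los. apply in_map_iff. exists v. split; auto. apply filter_In. split; auto. apply Z.ltb_lt; auto. }
    pose proof (Hdivq v Hv Hvd). nia.
  - rewrite Hvd in Hpos. pose proof (Hle v (FMset_zero d vs v Hv Hvd)). fold (av v) in H0. nia.
  - assert (Hu : t <= - av v * (N / v d)).
    { apply Ht2. unfold ups. apply in_map_iff. exists v. split; auto. apply filter_In. split; auto. apply Z.ltb_lt; auto. }
    pose proof (Hdivp v Hv Hvd). nia.
Qed.

Theorem CL : forall d vs, cone_hyp d vs -> forall b, exists (M : nat) u,
  (0 < M)%nat /\ incone vs u /\ forall i, (i < d)%nat -> u i = Z.of_nat M * b i.
Proof.
  induction d as [|d IH]; intros vs H b.
  - exists 1%nat, vzero. split; [lia|]. split; [constructor|]. intros; lia.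
  - destruct (H (unitZ d)) as [p [Hp Hpd]]. { exists d. split; [lia|]. unfold unitZ. rewrite Nat.eqb_refl. lia. }
    destruct (H (vscale (-1) (unitZ d))) as [q [Hq Hqd]].
    { exists d. split; [lia|]. unfold vscale, unitZ. rewrite Nat.eqb_refl. lia. }
    rewrite dot_unit in Hpd. rewrite dot_scale_l, dot_unit in Hqd.
    set (beta := b d).
    set (r := if Z_le_gt_dec 0 beta then p else q).
    assert (Hr : In r vs) by (unfold r; destruct (Z_le_gt_dec 0 beta); auto).
    set (c := Z.abs (r d)).
    assert (Hc : 0 < c) by (unfold c, r; destruct (Z_le_gt_dec 0 beta); lia).
    assert (Hcb : c * b d = Z.abs beta * r d) by (unfold c, r, beta; destruct (Z_le_gt_dec 0 (b d)); nia).
    set (c0 := fun i => c * b i - Z.abs beta * r i).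
    destruct (IH (FMset d vs) (FM_hyp d vs H) c0) as [M0 [u0 [HM0 [Hu0 Hu0i]]]].
    assert (Hu0d : u0 d = 0) by (apply (incone_coord0 (FMset d vs)); auto; apply FMset_last).
    exists (M0 * Z.to_nat c)%nat, (vadd u0 (vscale (Z.of_nat (M0 * Z.to_nat (Z.abs beta))) r)).
    split; [nia|]. split.
    + apply incone_add; [apply (incone_sub vs (FMset d vs)); auto; apply FMset_cone|].
      apply incone_nat, incone_in; auto.
    + intros i Hi. unfold vadd, vscale. rewrite !Nat2Z.inj_mul, !Z2Nat.id by lia.
      destruct (Nat.eq_dec i d) as [->|Hne].
      * rewrite Hu0d. fold beta. nia.
      * rewrite Hu0i by lia. unfold c0. ring.
Qed.

Open Scope Z_scope.

Fixpoint gcdl (d : nat) (phi : vecZ) : Z :=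
  match d with O => 0 | S d' => Z.gcd (gcdl d' phi) (phi d') end.

Lemma gcdl_div d phi i : (i < d)%nat -> (gcdl d phi | phi i).
Proof. induction d; intros Hi; [lia|]. simpl. destruct (Nat.eq_dec i d) as [->|].
  - apply Z.gcd_divide_r.
  - eapply Z.divide_trans; [apply Z.gcd_divide_l|]. apply IHd; lia. Qed.

Lemma gcdl_nonneg d phi : 0 <= gcdl d phi.
Proof. destruct d; simpl; [lia|apply Z.gcd_nonneg]. Qed.

Lemma gcdl_pos d phi : nonzero d phi -> 0 < gcdl d phi.
Proof. intros [i [Hi Hp]]. pose proof (gcdl_nonneg d phi). destruct (Z.eq_dec (gcdl d phi) 0); [|lia].
  exfalso. destruct (gcdl_div d phi i Hi) as [z Hz]. rewrite e in Hz. lia. Qed.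

Lemma gcdl_bezout d phi : exists u, dot d u phi = gcdl d phi.
Proof. induction d as [|d [u Hu]].
  - exists vzero. reflexivity.
  - simpl. destruct (Zis_gcd_bezout _ _ _ (Zgcd_is_gcd (gcdl d phi) (phi d))) as [al be Hab].
    exists (fun i => if Nat.ltb i d then al * u i else if Nat.eqb i d then be else 0).
    rewrite Nat.ltb_irrefl, Nat.eqb_refl.
    rewrite (dot_ext d _ (vscale al u) phi phi) by (intros i Hi; unfold vscale; destruct (Nat.ltb_spec i d); [auto|lia]).
    rewrite dot_scale_l, Hu. lia. Qed.

Lemma dot_comm d u v : dot d u v = dot d v u.
Proof. induction d; simpl; [auto|]. rewrite IHd. ring. Qed.

Lemma dot_hom d psi : is_hom d (fun v => dot d psi v).
Proof. split.
  - intros u v H. apply dot_ext. intros i Hi. split; auto.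
  - intros u v. apply (dot_add_r d psi u v). Qed.

Lemma prim_hom d phi : nonzero d phi -> exists L : vecZ -> Z, is_hom d L /\ surjZ L /\
  forall v, dot d phi v = gcdl d phi * L v.
Proof.
  intros Hnz. set (g := gcdl d phi). assert (Hg : 0 < g) by (apply gcdl_pos; auto).
  set (psi := fun i => phi i / g).
  assert (Hpsi : forall i, (i < d)%nat -> phi i = g * psi i).
  { intros i Hi. destruct (gcdl_div d phi i Hi) as [z Hz]. fold g in Hz. unfold psi. rewrite Hz, Z.div_mul by lia. ring. }
  assert (Hdot : forall v, dot d phi v = g * dot d psi v).
  { intros v. rewrite <- dot_scale_l. apply dot_ext. intros i Hi. unfold vscale. auto. }
  exists (fun v => dot d psi v). split; [apply dot_hom|]. split; [|auto].
  destruct (gcdl_bezout d phi) as [u Hu]. fold g in Hu.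
  assert (H1 : dot d psi u = 1).
  { rewrite dot_comm, Hdot in Hu. assert (g * (dot d psi u - 1) = 0) by lia. apply Z.mul_eq_0 in H. lia. }
  intros z. exists (vscale z u). rewrite dot_scale_r, H1. lia.
Qed.

Fixpoint vdb (k : nat) (A : nat -> nat -> bool) (x : nat) (l : list nat) : bool :=
  match l with
  | [] => Nat.ltb x k
  | y :: l' => Nat.ltb x k && A x y && vdb k A y l'
  end.

Lemma vdb_spec k A x l : vdb k A x l = true <-> vd k A x l.
Proof. revert x; induction l; intros x; simpl.
  - apply Nat.ltb_lt.
  - rewrite !andb_true_iff, Nat.ltb_lt, IHl. tauto. Qed.

Fixpoint allw (k n : nat) : list (list nat) :=
  match n with
  | O => [[]]
  | S n' => flat_map (fun l => map (fun x => x :: l) (seq 0 k)) (allw k n')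
  end.

Lemma allw_in k l : (forall x, In x l -> (x < k)%nat) -> In l (allw k (length l)).
Proof. induction l as [|y l IH]; intros H; simpl; [auto|]. apply in_flat_map. exists l. split.
  - apply IH. intros; apply H; simpl; auto.
  - apply in_map_iff. exists y. split; auto. apply in_seq. pose proof (H y (or_introl eq_refl)). lia. Qed.

Lemma vd_elems k A x l : vd k A x l -> forall z, In z l -> (z < k)%nat.
Proof. revert x; induction l; intros x H z Hz; [destruct Hz|]. destruct Hz as [<-|Hz].
  - destruct H as [_ [_ H]]. eapply vd_lt; eauto.
  - destruct H as [_ [_ H]]. eapply IHl; eauto. Qed.

Definition LP (k : nat) (A : nat -> nat -> bool) : list (nat * list nat) :=
  flat_map (fun x => flat_map (fun n => map (fun l => (x, l))
    (filter (fun l => vdb k A x l && Nat.eqb (last l x) x) (allw k n))) (seq 1 k)) (seq 0 k).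

Lemma LP_complete k A x l : isloop k A x l -> (length l <= k)%nat -> In (x, l) (LP k A).
Proof.
  intros [Hv [Hl Hlast]] Hk. unfold LP. apply in_flat_map. exists x. split.
  { apply in_seq. pose proof (vd_lt k A x l Hv). lia. }
  apply in_flat_map. exists (length l). split; [apply in_seq; lia|].
  apply in_map_iff. exists l. split; auto. apply filter_In. split.
  - apply allw_in. apply (vd_elems k A x l Hv).
  - rewrite andb_true_iff, vdb_spec, Nat.eqb_eq. auto. Qed.

Lemma LP_sound k A x l : In (x, l) (LP k A) -> isloop k A x l.
Proof.
  unfold LP. intros H. apply in_flat_map in H. destruct H as [x' [_ H]].
  apply in_flat_map in H. destruct H as [n [Hn H]]. apply in_map_iff in H. destruct H as [l' [E H]].
  inversion E; subst. apply filter_In in H. destruct H as [Hw H]. rewrite andb_true_iff, vdb_spec, Nat.eqb_eq in H.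
  destruct H as [Hv Hlast]. split; auto. split; auto. apply in_seq in Hn.
  assert (length l = n); [|lia]. clear -Hw. revert l Hw. induction n; intros l Hw; simpl in Hw.
  - destruct Hw as [<-|[]]; auto.
  - apply in_flat_map in Hw. destruct Hw as [l0 [H0 H1]]. apply in_map_iff in H1. destruct H1 as [z [<- _]].
    simpl. f_equal. auto. Qed.

Definition LPvec k A (h : nat -> nat -> vecZ) : list vecZ := map (fun p => vw h (fst p) (snd p)) (LP k A).

Lemma cone_hyp_from k A d h :
  (forall L : vecZ -> Z, is_hom d L -> surjZ L ->
      forall M : Z, exists (s : Z -> nat) (m : nat), inSigma k A s /\ (L (hsum h s m) > M)%Z) ->
  cone_hyp d (LPvec k A h).
Proof.
  intros H phi Hnz. destruct (prim_hom d phi Hnz) as [L [HL [HLs Hdot]]].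
  destruct (H L HL HLs (Z.of_nat k * wB k (fun u v => L (h u v)))) as [s [m [HS Hgt]]].
  destruct (pos_loop k A h d L s m HL HS Hgt) as [y [q [Hq [Hlen Hpos]]]].
  exists (vw h y q). split.
  - unfold LPvec. apply in_map_iff. exists (y, q). split; auto. apply LP_complete; auto.
  - rewrite Hdot, (L_vw d L) by auto. pose proof (gcdl_pos d phi Hnz). nia.
Qed.

Open Scope nat_scope.

Lemma vd_map_seq k A (p : nat -> nat) : forall n s, (forall m, s <= m <= s + n -> p m < k) ->
  (forall m, s <= m < s + n -> A (p m) (p (S m)) = true) -> vd k A (p s) (map p (seq (S s) n)).
Proof. induction n; intros s H1 H2; simpl.
  - apply H1; lia.
  - split; [apply H1; lia|]. split; [apply H2; lia|]. apply IHn; intros; [apply H1|apply H2]; lia. Qed.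

Lemma trans_path k A : transitive_SFT k A -> forall i j, i < k -> j < k ->
  exists l, vd k A i l /\ 1 <= length l /\ last l i = j.
Proof.
  intros HT i j Hi Hj. destruct (HT i j Hi Hj) as [n [p [Hn [Hp0 [Hpn [Hk HA]]]]]].
  exists (map p (seq 1 n)). split; [|split].
  - rewrite <- Hp0. apply vd_map_seq; intros; [apply Hk|apply HA]; lia.
  - rewrite length_map, length_seq. auto.
  - destruct n; [lia|]. rewrite seq_S, map_app. simpl. rewrite last_last. auto.
Qed.

Lemma fchoice {X} (x0 : X) n (P : nat -> X -> Prop) : (forall j, j < n -> exists x, P j x) ->
  exists f : nat -> X, forall j, j < n -> P j (f j).
Proof. induction n; intros H.
  - exists (fun _ => x0). intros; lia.
  - destruct IHn as [f Hf]; [intros; apply H; lia|]. destruct (H n ltac:(lia)) as [x Hx].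
    exists (fun j => if Nat.eqb j n then x else f j). intros j Hj.
    destruct (Nat.eqb_spec j n) as [->|]; [auto|apply Hf; lia]. Qed.

Lemma repc_vd k A x l c : isloop k A x l -> vd k A x (repc l c).
Proof. intros [Hv [_ Hl]]. induction c; simpl; [eapply vd_lt; eauto|]. apply vd_app. split; auto.
  rewrite repc_last; auto. Qed.

Lemma repc_vw h x l c : last l x = x -> vw h x (repc l c) = vscale (Z.of_nat c) (vw h x l).
Proof. intros Hl. induction c; simpl.
  - extensionality i. unfold vscale, vzero. lia.
  - rewrite vw_app, repc_last, IHc by auto. extensionality i. unfold vadd, vscale. lia. Qed.

Lemma sumN_update n (c : nat -> nat) J (g : nat -> Z) : J < n ->
  sumN n (fun j => Z.of_nat (if Nat.eqb j J then S (c j) else c j) * g j)%Z = (sumN n (fun j => Z.of_nat (c j) * g j) + g J)%Z.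
Proof.
  induction n; intros H; [lia|]. simpl. destruct (Nat.eqb_spec n J) as [->|Hne].
  - assert (E : sumN J (fun j => Z.of_nat (if Nat.eqb j J then S (c j) else c j) * g j)%Z = sumN J (fun j => Z.of_nat (c j) * g j)%Z).
    { clear IHn H. assert (forall m, m <= J -> sumN m (fun j => Z.of_nat (if Nat.eqb j J then S (c j) else c j) * g j)%Z = sumN m (fun j => Z.of_nat (c j) * g j)%Z); [|auto].
      induction m; intros; simpl; [auto|]. rewrite IHm by lia. destruct (Nat.eqb_spec m J); [lia|auto]. }
    rewrite E. lia.
  - rewrite IHn by lia. lia.
Qed.

Lemma sumN_ext n f g : (forall j, j < n -> f j = g j) -> sumN n f = sumN n g.
Proof. induction n; intros H; simpl; [auto|]. rewrite IHn, H by (auto; lia). auto. Qed.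

Lemma sumN_plus n f g : sumN n (fun j => f j + g j)%Z = (sumN n f + sumN n g)%Z.
Proof. induction n; simpl; [auto|]. rewrite IHn. lia. Qed.

Lemma sumN_scal n c f : sumN n (fun j => c * f j)%Z = (c * sumN n f)%Z.
Proof. induction n; simpl; [lia|]. rewrite IHn. lia. Qed.

Definition lpv (k : nat) A h j : vecZ := vw h (fst (nth j (LP k A) (0, []))) (snd (nth j (LP k A) (0, []))).

Lemma incone_counts k A h u : incone (LPvec k A h) u ->
  exists cnt : nat -> nat, forall i, u i = sumN (length (LP k A)) (fun j => Z.of_nat (cnt j) * lpv k A h j i)%Z.
Proof.
  induction 1 as [|v w Hv Hw [c Hc]].
  - exists (fun _ => 0). intros i. unfold vzero. symmetry. rewrite (sumN_ext _ _ (fun _ => 0%Z)) by (intros; lia).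
    clear. induction (length (LP k A)); simpl; lia.
  - unfold LPvec in Hv. apply in_map_iff in Hv. destruct Hv as [p [<- Hp]].
    destruct (In_nth _ _ (0, []) Hp) as [J [HJ EJ]].
    exists (fun j => if Nat.eqb j J then S (c j) else c j). intros i.
    rewrite sumN_update by auto. unfold vadd. rewrite Hc. unfold lpv. rewrite EJ. lia.
Qed.

Open Scope nat_scope.

Definition det (LPl : list (nat * list nat)) (G : nat -> list nat * list nat) j c :=
  fst (G j) ++ repc (snd (nth j LPl (0, []))) c ++ snd (G j).

Fixpoint tour LPl G n (cnt : nat -> nat) : list nat :=
  match n with O => [] | S n' => tour LPl G n' cnt ++ det LPl G n' (cnt n') end.

Definition Gok k A (LPl : list (nat * list nat)) (G : nat -> list nat * list nat) :=
  forall j, j < length LPl ->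
    isloop k A (fst (nth j LPl (0, []))) (snd (nth j LPl (0, []))) /\
    vd k A 0 (fst (G j)) /\ 1 <= length (fst (G j)) /\ last (fst (G j)) 0 = fst (nth j LPl (0, [])) /\
    vd k A (fst (nth j LPl (0, []))) (snd (G j)) /\ last (snd (G j)) (fst (nth j LPl (0, []))) = 0.

Definition Ej h (LPl : list (nat * list nat)) G j : vecZ :=
  vadd (vw h 0 (fst (G j))) (vw h (fst (nth j LPl (0, []))) (snd (G j))).

Definition Vj h (LPl : list (nat * list nat)) j : vecZ :=
  vw h (fst (nth j LPl (0, []))) (snd (nth j LPl (0, []))).

Lemma det_ok k A h LPl G j c : Gok k A LPl G -> j < length LPl ->
  isloop k A 0 (det LPl G j c) /\ vw h 0 (det LPl G j c) = vadd (Ej h LPl G j) (vscale (Z.of_nat c) (Vj h LPl j)).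
Proof.
  intros HG Hj. destruct (HG j Hj) as [Hl [Hg1 [Hg1l [Hg1e [Hg2 Hg2e]]]]].
  set (x := fst (nth j LPl (0, []))) in *. set (l := snd (nth j LPl (0, []))) in *.
  assert (Hrl : last (repc l c) x = x) by (apply repc_last, Hl).
  unfold det. fold l. split; [split; [|split]|].
  - apply vd_app. split; auto. rewrite Hg1e. apply vd_app. split; [apply repc_vd; auto|]. rewrite Hrl. auto.
  - rewrite !length_app. lia.
  - rewrite !last_app, Hg1e, Hrl. auto.
  - rewrite !vw_app, Hg1e, Hrl, repc_vw by apply Hl. extensionality i. unfold Ej, Vj, vadd, vscale. fold x l. lia.
Qed.

Lemma tour_ok k A h LPl G cnt n : (0 < k) -> Gok k A LPl G -> n <= length LPl ->
  vd k A 0 (tour LPl G n cnt) /\ last (tour LPl G n cnt) 0 = 0 /\ n <= length (tour LPl G n cnt) /\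
  forall i, vw h 0 (tour LPl G n cnt) i =
    (sumN n (fun j => Ej h LPl G j i) + sumN n (fun j => Z.of_nat (cnt j) * Vj h LPl j i))%Z.
Proof.
  intros Hk HG. induction n; intros Hn.
  - simpl. split; [auto|]. split; [auto|]. split; [lia|]. intros; reflexivity.
  - destruct IHn as [H1 [H2 [H3 H4]]]; [lia|].
    destruct (det_ok k A h LPl G n (cnt n) HG ltac:(lia)) as [[Hd1 [Hd2 Hd3]] Hd4].
    simpl tour. split; [|split; [|split]].
    + apply vd_app. rewrite H2. auto.
    + rewrite last_app, H2. auto.
    + rewrite length_app. lia.
    + intros i. rewrite vw_app, H2, Hd4. unfold vadd at 1. rewrite H4. simpl sumN. unfold vadd, vscale. ring.
Qed.

Lemma root_vec k A h d : (0 < k) -> transitive_SFT k A -> (1 <= length (LP k A)) -> cone_hyp d (LPvec k A h) ->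
  forall b : vecZ, exists W M, (0 < M) /\ isloop k A 0 W /\
    forall i, i < d -> vw h 0 W i = (Z.of_nat M * b i)%Z.
Proof.
  intros Hk HT HmL Hc b.
  set (LPl := LP k A). set (mL := length LPl).
  destruct (fchoice ([], []) mL (fun j g =>
    vd k A 0 (fst g) /\ 1 <= length (fst g) /\ last (fst g) 0 = fst (nth j LPl (0, [])) /\
    vd k A (fst (nth j LPl (0, []))) (snd g) /\ last (snd g) (fst (nth j LPl (0, []))) = 0)) as [G HG].
  { intros j Hj. assert (Hl : isloop k A (fst (nth j LPl (0, []))) (snd (nth j LPl (0, [])))).
    { apply LP_sound. rewrite <- surjective_pairing. apply nth_In. auto. }
    set (x := fst (nth j LPl (0, []))) in *.
    assert (Hx : x < k) by (eapply vd_lt; apply Hl).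
    destruct (trans_path k A HT 0 x Hk Hx) as [g1 [? [? ?]]].
    destruct (trans_path k A HT x 0 Hx Hk) as [g2 [? [? ?]]].
    exists (g1, g2). simpl. auto. }
  assert (HGok : Gok k A LPl G).
  { intros j Hj. split; [|apply HG; auto]. apply LP_sound. rewrite <- surjective_pairing. apply nth_In. auto. }
  set (uT := fun i => sumN mL (fun j => Ej h LPl G j i)).
  destruct (CL d _ Hc b) as [M1 [u1 [HM1 [Hu1 Hu1i]]]].
  destruct (CL d _ Hc (vscale (-1) uT)) as [M2 [u2 [HM2 [Hu2 Hu2i]]]].
  destruct (incone_counts k A h u1 Hu1) as [n1 Hn1].
  destruct (incone_counts k A h u2 Hu2) as [n2 Hn2].
  set (T1 := tour LPl G mL (fun j => n1 j + n2 j)).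
  set (T0 := tour LPl G mL (fun _ => 0)).
  destruct (tour_ok k A h LPl G (fun j => n1 j + n2 j) mL Hk HGok (le_n _)) as [HT1 [HT1l [HT1n HT1v]]].
  destruct (tour_ok k A h LPl G (fun _ => 0) mL Hk HGok (le_n _)) as [HT0 [HT0l [HT0n HT0v]]].
  fold T1 in HT1, HT1l, HT1n, HT1v. fold T0 in HT0, HT0l, HT0n, HT0v. fold LPl mL in HmL.
  exists (T1 ++ repc T0 (M2 - 1)), M1. split; auto. split; [split; [|split]|].
  - apply vd_app. rewrite HT1l. split; auto. apply repc_vd. split; auto. split; [lia|auto].
  - rewrite length_app. lia.
  - rewrite last_app, HT1l, repc_last; auto.
  - intros i Hi. rewrite vw_app. rewrite HT1l, repc_vw by auto. unfold vadd, vscale.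
    rewrite HT1v, HT0v.
    assert (Hz : forall f, sumN mL (fun j : nat => Z.of_nat 0 * f j)%Z = 0%Z) by (intros f; generalize mL; intros nn; induction nn; cbn [sumN]; [reflexivity|rewrite IHnn; reflexivity]).
    rewrite Hz.
    rewrite (sumN_ext mL (fun j => Z.of_nat (n1 j + n2 j) * Vj h LPl j i)%Z
      (fun j => Z.of_nat (n1 j) * lpv k A h j i + Z.of_nat (n2 j) * lpv k A h j i)%Z)
      by (intros; unfold Vj, lpv, LPl; rewrite Nat2Z.inj_add; ring).
    rewrite sumN_plus, <- Hn1, <- Hn2. rewrite Hu1i, Hu2i by auto. fold uT. unfold vscale.
    replace (Z.of_nat (M2 - 1)) with (Z.of_nat M2 - 1)%Z by lia. unfold uT. ring.
Qed.

Open Scope R_scope.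

Lemma sum_lt_split a b f : sum_lt (a + b) f = sum_lt a f + sum_lt b (fun i => f (a + i)%nat).
Proof. induction b; simpl. { rewrite Nat.add_0_r. lra. } rewrite Nat.add_succ_r. simpl. rewrite IHb. lra. Qed.

Lemma sum_lt_S n f : sum_lt (S n) f = f 0%nat + sum_lt n (fun i => f (S i)).
Proof. induction n; simpl; [lra|]. simpl in IHn. rewrite IHn. lra. Qed.

Lemma sum_lt_delta d (g : nat -> R) i' : (i' < d)%nat -> sum_lt d (fun i => g i * IZR (unitZ i i')) = g i'.
Proof. induction d; intros H; [lia|]. simpl. destruct (Nat.eq_dec i' d) as [->|Hne].
  - rewrite (sum_lt_ext _ _ (fun _ => 0)) by (intros; unfold unitZ; destruct (Nat.eqb_spec d j); [lia|]; simpl; lra).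
    rewrite sum_lt_const. unfold unitZ. rewrite Nat.eqb_refl. simpl. lra.
  - rewrite IHd by lia. unfold unitZ. destruct (Nat.eqb_spec i' d); [lia|]. simpl. lra. Qed.

Lemma part2_bwd k A d h : (0 < k)%nat -> transitive_SFT k A ->
  (forall L : vecZ -> Z, is_hom d L -> surjZ L ->
      forall M : Z, exists (s : Z -> nat) (m : nat), inSigma k A s /\ (L (hsum h s m) > M)%Z) ->
  in_interior d (rot_set d k A h) (fun _ => 0).
Proof.
  intros Hk HT Hyp.
  destruct d as [|d'].
  { exists 1. split; [lra|]. intros y _. destruct (trans_path k A HT 0 0 Hk Hk) as [l [Hv [Hl Hlast]]].
    exists (per 0 l). split; [apply per_inSigma; split; auto|]. intros i Hi; lia. }
  set (d := S d').
  assert (Hc := cone_hyp_from k A d h Hyp).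
  assert (HmL : (1 <= length (LP k A))%nat).
  { destruct (Hc (unitZ 0)) as [v [Hv _]]. { exists 0%nat. split; [unfold d; lia|unfold unitZ; simpl; lia]. }
    unfold LPvec in Hv. apply in_map_iff in Hv. destruct Hv as [p [_ Hp]]. destruct (LP k A); [destruct Hp|]. simpl; lia. }
  assert (HR := root_vec k A h d Hk HT HmL Hc).
  destruct (fchoice ([], 0%nat) d (fun i WM => (0 < snd WM)%nat /\ isloop k A 0 (fst WM) /\
     forall i', (i' < d)%nat -> vw h 0 (fst WM) i' = (Z.of_nat (snd WM) * unitZ i i')%Z)) as [Wp HWp].
  { intros i Hi. destruct (HR (unitZ i)) as [W [M H]]. exists (W, M). auto. }
  destruct (fchoice ([], 0%nat) d (fun i WM => (0 < snd WM)%nat /\ isloop k A 0 (fst WM) /\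
     forall i', (i' < d)%nat -> vw h 0 (fst WM) i' = (Z.of_nat (snd WM) * (- unitZ i i'))%Z)) as [Wm HWm].
  { intros i Hi. destruct (HR (vscale (-1) (unitZ i))) as [W [M H]]. exists (W, M). unfold vscale in H.
    split; [apply H|]. split; [apply H|]. intros i' Hi'. destruct H as [_ [_ H]]. rewrite H by auto. cbn [snd]. ring. }
  destruct (HR vzero) as [Z0 [M0 [HM0 [HZ0 HZ0v]]]].
  set (lp := fun i => INR (length (fst (Wp i)))). set (mp := fun i => INR (snd (Wp i))).
  set (lm := fun i => INR (length (fst (Wm i)))). set (mm := fun i => INR (snd (Wm i))).
  assert (Hmp : forall i, (i < d)%nat -> 0 < mp i) by (intros; apply lt_0_INR, HWp; auto).
  assert (Hmm : forall i, (i < d)%nat -> 0 < mm i) by (intros; apply lt_0_INR, HWm; auto).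
  assert (Hlp : forall i, (i < d)%nat -> 0 <= lp i) by (intros; apply pos_INR).
  assert (Hlm : forall i, (i < d)%nat -> 0 <= lm i) by (intros; apply pos_INR).
  set (Q := sum_lt d (fun i => lp i / mp i + lm i / mm i)).
  assert (HQ : 0 <= Q).
  { apply sum_lt_nonneg. intros i Hi. pose proof (Hmp i Hi). pose proof (Hmm i Hi). pose proof (Hlp i Hi). pose proof (Hlm i Hi).
    assert (0 <= lp i / mp i) by (apply Rmult_le_pos; [auto|apply Rlt_le, Rinv_0_lt_compat; auto]).
    assert (0 <= lm i / mm i) by (apply Rmult_le_pos; [auto|apply Rlt_le, Rinv_0_lt_compat; auto]). lra. }
  set (eps := 1 / (1 + Q)).
  exists eps. split; [unfold eps; apply Rdiv_lt_0_compat; lra|].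
  intros y Hy.
  set (lamp := fun i => if Rle_dec 0 (y i) then y i / mp i else 0).
  set (lamm := fun i => if Rle_dec 0 (y i) then 0 else - y i / mm i).
  set (Sd := sum_lt d (fun i => lamp i * lp i + lamm i * lm i)).
  set (l0 := INR (length Z0)).
  assert (Hl0 : 0 < l0) by (apply lt_0_INR; destruct HZ0 as [_ [? _]]; lia).
  assert (HSd : Sd <= 1).
  { assert (Sd <= sum_lt d (fun i => eps * (lp i / mp i + lm i / mm i))).
    { apply sum_lt_le. intros i Hi. specialize (Hy i Hi). rewrite Rminus_0_r in Hy.
      pose proof (Hmp i Hi). pose proof (Hmm i Hi). pose proof (Hlp i Hi). pose proof (Hlm i Hi).
      unfold lamp, lamm. destruct (Rle_dec 0 (y i)) as [Hyi|Hyi].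
      - rewrite Rabs_right in Hy by lra.
        assert (y i / mp i * lp i <= eps * (lp i / mp i)).
        { unfold Rdiv. replace (y i * / mp i * lp i) with (y i * (lp i * / mp i)) by ring.
          apply Rmult_le_compat_r; [apply Rmult_le_pos; [auto|apply Rlt_le, Rinv_0_lt_compat; auto]|lra]. }
        assert (0 <= eps * (lm i / mm i)).
        { apply Rmult_le_pos; [unfold eps; apply Rlt_le, Rdiv_lt_0_compat; lra|]. apply Rmult_le_pos; [auto|apply Rlt_le, Rinv_0_lt_compat; auto]. }
        lra.
      - rewrite Rabs_left in Hy by lra.
        assert (- y i / mm i * lm i <= eps * (lm i / mm i)).
        { unfold Rdiv. replace (- y i * / mm i * lm i) with (- y i * (lm i * / mm i)) by ring.
          apply Rmult_le_compat_r; [apply Rmult_le_pos; [auto|apply Rlt_le, Rinv_0_lt_compat; auto]|lra]. }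
        assert (0 <= eps * (lp i / mp i)).
        { apply Rmult_le_pos; [unfold eps; apply Rlt_le, Rdiv_lt_0_compat; lra|]. apply Rmult_le_pos; [auto|apply Rlt_le, Rinv_0_lt_compat; auto]. }
        lra. }
    rewrite sum_lt_scal in H. fold Q in H. unfold eps in H.
    assert (1 / (1 + Q) * Q <= 1); [|lra].
    apply (Rmult_le_reg_r (1 + Q)); [lra|]. field_simplify; lra. }
  set (m := (1 + d + d)%nat).
  set (F := fun j => if Nat.eqb j 0 then Z0 else if Nat.leb j d then fst (Wp (j - 1)%nat) else fst (Wm (j - 1 - d)%nat)).
  set (lam := fun j => if Nat.eqb j 0 then (1 - Sd) / l0 else if Nat.leb j d then lamp (j - 1)%nat else lamm (j - 1 - d)%nat).
  assert (Fp : forall i, (i < d)%nat -> F (S i) = fst (Wp i) /\ lam (S i) = lamp i).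
  { intros i Hi. unfold F, lam. destruct (Nat.eqb_spec (S i) 0); [lia|]. destruct (Nat.leb_spec (S i) d); [|lia].
    replace (S i - 1)%nat with i by lia. auto. }
  assert (Fm : forall i, (i < d)%nat -> F (S d + i)%nat = fst (Wm i) /\ lam (S d + i)%nat = lamm i).
  { intros i Hi. unfold F, lam. destruct (Nat.eqb_spec (S d + i) 0); [lia|]. destruct (Nat.leb_spec (S d + i) d); [lia|].
    replace (S d + i - 1 - d)%nat with i by lia. auto. }
  assert (F0 : F 0%nat = Z0 /\ lam 0%nat = (1 - Sd) / l0) by (unfold F, lam; simpl; auto).
  assert (Hsplit : forall f, sum_lt m f = f 0%nat + sum_lt d (fun i => f (S i)) + sum_lt d (fun i => f (S d + i)%nat)).
  { intros f. unfold m. replace (1 + d + d)%nat with (S d + d)%nat by lia. rewrite sum_lt_split, sum_lt_S. auto. }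
  assert (Hlamp : forall i, 0 <= lamp i).
  { intros i. unfold lamp. destruct (Rle_dec 0 (y i)); [|lra]. destruct (Nat.lt_ge_cases i d) as [Hi|Hi].
    - apply Rmult_le_pos; [auto|apply Rlt_le, Rinv_0_lt_compat; auto].
    - unfold mp. destruct (snd (Wp i)); [simpl; unfold Rdiv; rewrite Rinv_0; lra|].
      apply Rmult_le_pos; [auto|apply Rlt_le, Rinv_0_lt_compat, lt_0_INR; lia]. }
  assert (Hlamm : forall i, 0 <= lamm i).
  { intros i. unfold lamm. destruct (Rle_dec 0 (y i)); [lra|]. destruct (Nat.lt_ge_cases i d) as [Hi|Hi].
    - apply Rmult_le_pos; [lra|apply Rlt_le, Rinv_0_lt_compat; auto].
    - unfold mm. destruct (snd (Wm i)); [simpl; unfold Rdiv; rewrite Rinv_0; lra|].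
      apply Rmult_le_pos; [lra|apply Rlt_le, Rinv_0_lt_compat, lt_0_INR; lia]. }
  assert (Hok : loops_ok k A 0 m F).
  { intros j Hj. destruct (Nat.eq_dec j 0) as [->|Hj0]; [rewrite (proj1 F0); auto|].
    destruct (Nat.le_gt_cases j d) as [Hjd|Hjd].
    - replace j with (S (j - 1)) by lia. rewrite (proj1 (Fp (j - 1)%nat ltac:(lia))). apply HWp. lia.
    - replace j with (S d + (j - 1 - d))%nat by lia. rewrite (proj1 (Fm (j - 1 - d)%nat ltac:(unfold m in Hj; lia))).
      apply HWm. unfold m in Hj; lia. }
  assert (Hnn : forall j, (j < m)%nat -> 0 <= lam j).
  { intros j Hj. unfold lam. destruct (Nat.eqb j 0); [apply Rmult_le_pos; [lra|apply Rlt_le, Rinv_0_lt_compat; auto]|].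
    destruct (Nat.leb j d); auto. }
  assert (Hsum : sum_lt m (fun j => lam j * INR (length (F j))) = 1).
  { rewrite Hsplit. rewrite (proj1 F0), (proj2 F0).
    rewrite (sum_lt_ext d (fun i => lam (S i) * INR (length (F (S i)))) (fun i => lamp i * lp i))
      by (intros i Hi; destruct (Fp i Hi) as [-> ->]; auto).
    rewrite (sum_lt_ext d (fun i => lam (S d + i)%nat * INR (length (F (S d + i)%nat))) (fun i => lamm i * lm i))
      by (intros i Hi; destruct (Fm i Hi) as [-> ->]; auto).
    fold l0. unfold Sd in *. rewrite sum_lt_plus in *. field. lra. }
  destruct (RL k A h d 0%nat m F lam ltac:(unfold m; lia) Hok Hnn Hsum) as [HS Hrot].
  eexists. split; [exact HS|]. intros i Hi. specialize (Hrot i Hi). simpl in Hrot.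
  replace (y i) with (sum_lt m (fun j => lam j * IZR (vw h 0 (F j) i))); [exact Hrot|].
  rewrite Hsplit. rewrite (proj1 F0), HZ0v by auto. unfold vzero. rewrite Z.mul_0_r.
  rewrite (sum_lt_ext d (fun i0 => lam (S i0) * IZR (vw h 0 (F (S i0)) i)) (fun i0 => (lamp i0 * mp i0) * IZR (unitZ i0 i)))
    by (intros i0 Hi0; destruct (Fp i0 Hi0) as [-> ->]; rewrite (proj2 (proj2 (HWp i0 Hi0))) by auto;
        rewrite mult_IZR, <- INR_IZR_INZ; unfold mp; ring).
  rewrite (sum_lt_ext d (fun i0 => lam (S d + i0)%nat * IZR (vw h 0 (F (S d + i0)%nat) i)) (fun i0 => (- (lamm i0 * mm i0)) * IZR (unitZ i0 i)))
    by (intros i0 Hi0; destruct (Fm i0 Hi0) as [-> ->]; rewrite (proj2 (proj2 (HWm i0 Hi0))) by auto;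
        rewrite mult_IZR, opp_IZR, <- INR_IZR_INZ; unfold mm; ring).
  rewrite !sum_lt_delta by auto.
  pose proof (Hmp i Hi). pose proof (Hmm i Hi).
  unfold lamp, lamm. destruct (Rle_dec 0 (y i)); field; lra.
Qed.

Theorem mainTheorem8 (k : nat) (A : nat -> nat -> bool) (d : nat) (h : nat -> nat -> vecZ) :
  (0 < k)%nat -> transitive_SFT k A ->
  (forall L : vecZ -> Z, is_hom d L -> surjZ L ->
     exists C : R, C > 0 /\
       (forall (s : Z -> nat) (n : nat), inSigma k A s -> (0 < n)%nat ->
          IZR (L (hsum h s n)) > C ->
          exists (s' : Z -> nat) (n' : nat), inSigma k A s' /\ (0 < n')%nat /\
            periodic s' n' /\ exists x, has_rot d h s' x /\ Lhat d L x > 0) /\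
       (forall (s : Z -> nat) (n : nat), inSigma k A s -> (0 < n)%nat ->
          IZR (L (hsum h s n)) < - C ->
          exists s'' : Z -> nat, inSigma k A s'' /\
            exists x, has_rot d h s'' x /\ Lhat d L x < 0)) /\
  (in_interior d (rot_set d k A h) (fun _ => 0) <->
   (forall L : vecZ -> Z, is_hom d L -> surjZ L ->
      forall M : Z, exists (s : Z -> nat) (m : nat), inSigma k A s /\
        (L (hsum h s m) > M)%Z)).
Proof.
  intros Hk HT. split.
  - intros L HL _. apply part1; auto.
  - split; [apply part2_fwd|apply part2_bwd; auto].
Qed.
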